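(* Consider an asymptotically polytropic equation of state whose asymptotic index at low pressure satisfies $0\le n_0\le 3$ (i.e. $\rho(p)=K p^{n_0/(n_0+1)}(1+O(p^{a_0/(n_0+1)}))$ as $p\to0$). Then every perfect fluid solution with positive mass, regular or not, has finite radius and finite total mass: there is $R<\infty$ with $p(r)>0$ for $r<R$ and $p(r)\to0$ as $r\to R$, and $M=\lim_{r\to R}m(r)<\infty$.
   Context: Equation of state: a barotropic relation $\rho=\rho(p)$, defined for $p\ge 0$, with $\rho>0$ for $p>0$, such that $\eta(p)=\int_0^p dp'/\rho(p')$ is finite for $p>0$; $\rho,p$ are regarded as functions of $\eta$. Index function: $n(\eta)=\frac{\eta}{\rho}\frac{d\rho}{d\eta}$. Asymptotically polytropic: $n$ is $C^1$ on $(0,\infty)$, bounded and non-negative on $[0,\infty]$, and $n(\eta)-n_0=O(\eta^{a_0})$ as $\eta\to0$, $n(\eta)-n_1=O(\eta^{-a_1})$ as $\eta\to\infty$ for some $n_0,n_1\ge0$, $a_0,a_1>0$. Perfect fluid solution: a solution $(m(r),p(r))$, $p>0$, of the Newtonian static spherically symmetric equations $dm/dr=4\pi r^2\rho(p)$, $dp/dr=-m\rho(p)/r^2$ (gravitational constant $1$), continued outward in $r$ as long as $p>0$. It is regular if $m(r)\to0$ and $p(r)\to p_c\in(0,\infty)$ as $r\to0$. ''Any perfect fluid solution'' here includes non-regular ones such as those with a point-mass singularity at $r=0$ and those that started with negative mass and reached $m=0$ at some radius, considered in the region where $m>0$. *)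

(* Defs.v *)
From Stdlib Require Import Reals.
From Coquelicot Require Import Coquelicot.
Open Scope R_scope.

Definition EOS (rho : R -> R) : Prop :=
  forall p, 0 < p -> 0 < rho p.

Definition is_eta (rho eta : R -> R) : Prop :=
  forall p, 0 < p ->
    is_RInt_gen (fun q => / rho q) (at_right 0) (at_point p) (eta p).

(* Index function n(eta) = (eta / rho) d rho / d eta, where rhoE is rho
   regarded as a function of eta. *)
Definition index_fun (rhoE : R -> R) (e : R) : R :=
  e / rhoE e * Derive rhoE e.

Definition asymptotically_polytropic (rho : R -> R) (n0 n1 a0 a1 : R) : Prop :=
  exists eta rhoE : R -> R,
    is_eta rho eta /\
    (forall p, 0 < p -> rhoE (eta p) = rho p) /\
    (* eta ranges over (0, oo), so that n is defined on (0, oo) *)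
    (forall e, 0 < e -> exists p, 0 < p /\ eta p = e) /\
    (forall e, 0 < e -> ex_derive rhoE e) /\
    (forall e, 0 < e ->
       ex_derive (index_fun rhoE) e /\ continuous (Derive (index_fun rhoE)) e) /\
    0 <= n0 /\ 0 <= n1 /\
    (exists B, forall e, 0 < e -> 0 <= index_fun rhoE e <= B) /\
    0 < a0 /\ 0 < a1 /\
    (exists C d, 0 < d /\ forall e, 0 < e < d ->
       Rabs (index_fun rhoE e - n0) <= C * Rpower e a0) /\
    (exists C E, forall e, E < e ->
       Rabs (index_fun rhoE e - n1) <= C * Rpower e (- a1)).

Definition fluid_solution (rho : R -> R) (m p : R -> R) (r0 : R) (Rb : Rbar)
  : Prop :=
  0 <= r0 /\ Rbar_lt r0 Rb /\
  forall r, r0 < r -> Rbar_lt r Rb ->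
    0 < p r /\ 0 < m r /\
    is_derive m r (4 * PI * r ^ 2 * rho (p r)) /\
    is_derive p r (- (m r * rho (p r)) / r ^ 2).

Definition maximal_fluid_solution (rho : R -> R) (m p : R -> R) (r0 : R)
  (Rb : Rbar) : Prop :=
  fluid_solution rho m p r0 Rb /\
  ~ (exists (m2 p2 : R -> R) (R2 : Rbar),
       Rbar_lt Rb R2 /\ fluid_solution rho m2 p2 r0 R2 /\
       forall r, r0 < r -> Rbar_lt r Rb -> m2 r = m r /\ p2 r = p r).

(* Main.v *)
Require Import Defs.
From Stdlib Require Import Reals Lra Psatz Classical.
From Coquelicot Require Import Coquelicot.
Open Scope R_scope.

Lemma der_cont f x l : is_derive f x l -> continuity_pt f x.
Proof. intros H. apply continuity_pt_filterlim. apply (ex_derive_continuous (V:=R_NormedModule)). now exists l. Qed.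

Lemma mono_le (f df : R -> R) (a b : Rbar) :
  (forall x : R, Rbar_lt a x -> Rbar_lt x b -> is_derive f x (df x)) ->
  (forall x : R, Rbar_lt a x -> Rbar_lt x b -> 0 <= df x) ->
  forall x y : R, Rbar_lt a x -> x <= y -> Rbar_lt y b -> f x <= f y.
Proof.
  intros Hd Hp x y Hax Hxy Hyb.
  destruct (Req_dec x y) as [->|Hne]; [lra|].
  assert (Hlt : x < y) by lra.
  assert (Hin : forall z, x <= z <= y -> Rbar_lt a z /\ Rbar_lt z b).
  { intros z Hz. split.
    - eapply Rbar_lt_le_trans; [exact Hax|]. simpl; lra.
    - eapply Rbar_le_lt_trans; [|exact Hyb]. simpl; lra. }
  destruct (MVT_gen f x y df) as [c [Hc Heq]].
  - intros z Hz. rewrite Rmin_left in Hz by lra. rewrite Rmax_right in Hz by lra.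
    destruct (Hin z) as [H1 H2]; [lra|]. now apply Hd.
  - intros z Hz. rewrite Rmin_left in Hz by lra. rewrite Rmax_right in Hz by lra.
    destruct (Hin z) as [H1 H2]; [lra|]. eapply der_cont. now apply Hd.
  - rewrite Rmin_left in Hc by lra. rewrite Rmax_right in Hc by lra.
    destruct (Hin c) as [H1 H2]; [lra|]. specialize (Hp c H1 H2). nra.
Qed.

Lemma mono_ge (f df : R -> R) (a b : Rbar) :
  (forall x : R, Rbar_lt a x -> Rbar_lt x b -> is_derive f x (df x)) ->
  (forall x : R, Rbar_lt a x -> Rbar_lt x b -> df x <= 0) ->
  forall x y : R, Rbar_lt a x -> x <= y -> Rbar_lt y b -> f y <= f x.
Proof.
  intros Hd Hp x y H1 H2 H3.
  assert (- f x <= - f y); [|lra].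
  apply (mono_le (fun z => - f z) (fun z => - df z) a b); auto.
  - intros z Hz1 Hz2. exact (is_derive_opp f z (df z) (Hd z Hz1 Hz2)).
  - intros z Hz1 Hz2. specialize (Hp z Hz1 Hz2). lra.
Qed.

Lemma lip_cont (f : R -> R) (x K : R) : 0 <= K -> (exists d, 0 < d /\ forall y, Rabs (y - x) < d -> Rabs (f y - f x) <= K * Rabs (y - x)) -> continuous f x.
Proof.
  intros HK [d [Hd H]].
  apply filterlim_locally. intros eps.
  exists (mkposreal (Rmin d (eps / (K + 1))) ltac:(apply Rmin_pos; [lra| apply Rdiv_lt_0_compat; [apply cond_pos|lra]])).
  intros y Hy. simpl in Hy. unfold ball in Hy; simpl in Hy; unfold AbsRing_ball, abs, minus, plus, opp in Hy; simpl in Hy.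
  unfold ball; simpl; unfold AbsRing_ball, abs, minus, plus, opp; simpl.
  assert (Hy1 : Rabs (y - x) < d) by (eapply Rlt_le_trans; [exact Hy| apply Rmin_l]).
  assert (Hy2 : Rabs (y - x) < eps / (K+1)) by (eapply Rlt_le_trans; [exact Hy| apply Rmin_r]).
  specialize (H y Hy1). unfold Rminus in *.
  apply Rle_lt_trans with (K * Rabs (y + - x)); [exact H|].
  assert (0 < eps) by apply cond_pos.
  assert (Rabs (y + - x) * (K+1) < eps).
  { apply Rmult_lt_reg_r with (/ (K+1)). apply Rinv_0_lt_compat; lra.
    rewrite Rmult_assoc, Rinv_r, Rmult_1_r by lra. exact Hy2. }
  pose proof (Rabs_pos (y + - x)). nra.
Qed.

Lemma eta_approx rho eta q eps : is_eta rho eta -> 0 < q -> 0 < eps ->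
  exists d, 0 < d /\ forall a, 0 < a < d -> exists y, is_RInt (fun x => / rho x) a q y /\ Rabs (y - eta q) < eps.
Proof.
  intros He Hq Heps. specialize (He q Hq).
  unfold is_RInt_gen, filterlimi, filter_le, filtermapi in He.
  specialize (He (ball (eta q) (mkposreal eps Heps)) (locally_ball _ _)).
  destruct He as [Q R HQ HR HQR].
  destruct HQ as [d Hd].
  exists d. split; [apply cond_pos|].
  intros a Ha. destruct (HQR a q) as [y [Hy1 Hy2]].
  - apply Hd; [|lra]. unfold ball; simpl; unfold AbsRing_ball, abs, minus, plus, opp; simpl.
    rewrite Rabs_right; lra.
  - exact HR.
  - exists y. split; [exact Hy1|]. exact Hy2.
Qed.

Lemma small_zero x : (forall eps, 0 < eps -> Rabs x < eps) -> x = 0.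
Proof.
  intros H. destruct (Req_dec x 0) as [|Hn]; [auto|].
  specialize (H (Rabs x) (Rabs_pos_lt x Hn)). lra.
Qed.

Lemma eta_int rho eta q1 q2 : is_eta rho eta -> 0 < q1 -> 0 < q2 ->
  is_RInt (fun x => / rho x) q1 q2 (eta q2 - eta q1).
Proof.
  intros He H1 H2.
  assert (Hpair : forall eps, 0 < eps -> exists y1 y2, is_RInt (fun x => / rho x) q1 q2 (y2 - y1) /\
     Rabs (y1 - eta q1) < eps /\ Rabs (y2 - eta q2) < eps).
  { intros eps Heps.
    destruct (eta_approx rho eta q1 eps He H1 Heps) as [d1 [Hd1 Hy1]].
    destruct (eta_approx rho eta q2 eps He H2 Heps) as [d2 [Hd2 Hy2]].
    set (a := Rmin d1 d2 / 2).
    assert (0 < Rmin d1 d2) by (apply Rmin_pos; lra).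
    assert (Ha1 : 0 < a < d1) by (unfold a; pose proof (Rmin_l d1 d2); lra).
    assert (Ha2 : 0 < a < d2) by (unfold a; pose proof (Rmin_r d1 d2); lra).
    destruct (Hy1 a Ha1) as [y1 [I1 E1]]. destruct (Hy2 a Ha2) as [y2 [I2 E2]].
    exists y1, y2. split; [|split; assumption].
    apply is_RInt_swap in I1.
    pose proof (is_RInt_Chasles _ _ _ _ _ _ I1 I2) as I.
    replace (y2 - y1) with (plus (opp y1) y2) by (unfold plus, opp; simpl; ring). exact I. }
  destruct (Hpair 1 Rlt_0_1) as [z1 [z2 [Iz _]]].
  assert (Hv : z2 - z1 = eta q2 - eta q1).
  { apply Rminus_diag_uniq. apply small_zero. intros eps Heps.
    destruct (Hpair (eps/3)) as [y1 [y2 [Iy [E1 E2]]]]; [lra|].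
    pose proof (is_RInt_unique _ _ _ _ Iz) as U1. pose proof (is_RInt_unique _ _ _ _ Iy) as U2.
    assert (z2 - z1 = y2 - y1) by congruence.
    apply Rabs_def1; apply Rabs_def2 in E1; apply Rabs_def2 in E2; lra. }
  rewrite <- Hv. exact Iz.
Qed.

Definition EOSd (rho eta rhoE : R -> R) (B : R) : Prop :=
  EOS rho /\ is_eta rho eta /\ (forall p, 0 < p -> rhoE (eta p) = rho p) /\
  (forall e, 0 < e -> exists p, 0 < p /\ eta p = e) /\
  (forall e, 0 < e -> ex_derive rhoE e) /\
  (forall e, 0 < e -> 0 <= index_fun rhoE e <= B).




Lemma rhoE_pos rho eta rhoE B e : EOSd rho eta rhoE B -> 0 < e -> 0 < rhoE e.
Proof.
  intros (H1&H2&H3&H4&H5&H6) He. destruct (H4 e He) as [p [Hp <-]].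
  rewrite H3 by exact Hp. now apply H1.
Qed.

Lemma rhoE_der rho eta rhoE B e : EOSd rho eta rhoE B -> 0 < e ->
  is_derive rhoE e (index_fun rhoE e * rhoE e / e).
Proof.
  intros H He. pose proof (rhoE_pos _ _ _ _ _ H He) as Hp.
  destruct H as (H1&H2&H3&H4&H5&H6).
  replace (index_fun rhoE e * rhoE e / e) with (Derive rhoE e).
  - apply Derive_correct. now apply H5.
  - unfold index_fun. field. split; lra.
Qed.

Lemma rhoE_mono rho eta rhoE B e1 e2 : EOSd rho eta rhoE B -> 0 < e1 -> e1 <= e2 -> rhoE e1 <= rhoE e2.
Proof.
  intros H He1 He2.
  apply (mono_le rhoE (fun e => index_fun rhoE e * rhoE e / e) (Finite 0) p_infty); auto.
  - intros x Hx _. apply (rhoE_der _ _ _ _ _ H Hx).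
  - intros x Hx _. simpl in Hx. pose proof (rhoE_pos _ _ _ _ _ H Hx).
    destruct H as (H1&H2&H3&H4&H5&H6). destruct (H6 x Hx).
    apply Rmult_le_pos; [apply Rmult_le_pos; lra|]. left; apply Rinv_0_lt_compat; lra.
  - simpl; exact I.
Qed.

Lemma eta_nonneg rho eta rhoE B q : EOSd rho eta rhoE B -> 0 < q -> 0 <= eta q.
Proof.
  intros H Hq. destruct (Rle_lt_dec 0 (eta q)) as [|Hn]; [auto|].
  exfalso. destruct H as (H1&H2&H3&H4&H5&H6).
  destruct (eta_approx rho eta q (- eta q) H2 Hq) as [d [Hd Hy]]; [lra|].
  set (a := Rmin d q / 2).
  assert (0 < Rmin d q) by (apply Rmin_pos; lra).
  destruct (Hy a) as [y [Iy Ey]]. { unfold a; pose proof (Rmin_l d q); lra. }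
  assert (0 <= y).
  { apply (is_RInt_ge_0 (fun x => / rho x) a q y); [unfold a; pose proof (Rmin_r d q); lra| exact Iy|].
    intros x Hx. left. apply Rinv_0_lt_compat. apply H1. unfold a in Hx. lra. }
  apply Rabs_def2 in Ey. lra.
Qed.

Lemma eta_mono rho eta rhoE B q1 q2 : EOSd rho eta rhoE B -> 0 < q1 -> q1 <= q2 -> eta q1 <= eta q2.
Proof.
  intros H Hq1 Hq2. pose proof H as (H1&H2&H3&H4&H5&H6).
  pose proof (eta_int rho eta q1 q2 H2 Hq1 ltac:(lra)) as I.
  assert (0 <= eta q2 - eta q1); [|lra].
  apply (is_RInt_ge_0 (fun x => / rho x) q1 q2 _ Hq2 I). intros x Hx. left. apply Rinv_0_lt_compat, H1. lra.
Qed.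

Lemma eta_pos rho eta rhoE B q : EOSd rho eta rhoE B -> 0 < q -> 0 < eta q.
Proof.
  intros H Hq. destruct (Rlt_le_dec 0 (eta q)) as [|Hn]; [auto|]. exfalso.
  pose proof H as (H1&H2&H3&H4&H5&H6).
  assert (Hz : forall x, q/2 <= x <= q -> eta x = 0).
  { intros x Hx. pose proof (eta_nonneg _ _ _ _ x H ltac:(lra)).
    pose proof (eta_mono _ _ _ _ x q H ltac:(lra) ltac:(lra)). lra. }
  pose proof (eta_int rho eta (q/2) q H2 ltac:(lra) Hq) as I.
  rewrite (Hz q), (Hz (q/2)) in I by lra.
  assert (I2 : is_RInt (fun x => / rho x) (q/2) q (scal (q - q/2) (/ rhoE 0))).
  { apply is_RInt_ext with (fun _ => / rhoE 0).
    - intros x Hx. rewrite Rmin_left in Hx by lra. rewrite Rmax_right in Hx by lra.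
      rewrite <- H3 by lra. rewrite Hz by lra. reflexivity.
    - apply (is_RInt_const (V:=R_NormedModule)). }
  pose proof (is_RInt_unique _ _ _ _ I) as U1. pose proof (is_RInt_unique _ _ _ _ I2) as U2.
  rewrite U1 in U2. unfold scal in U2; simpl in U2; unfold mult in U2; simpl in U2.
  assert (0 < rhoE 0).
  { replace (rhoE 0) with (rho q) by (rewrite <- H3 by lra; now rewrite Hz by lra). now apply H1. }
  assert (0 < (q - q/2) * / rhoE 0).
  { apply Rmult_lt_0_compat; [lra|]. now apply Rinv_0_lt_compat. }
  lra.
Qed.

Lemma rho_eq rho eta rhoE B q : EOSd rho eta rhoE B -> 0 < q -> rho q = rhoE (eta q).
Proof. intros (H1&H2&H3&H4&H5&H6) Hq. now rewrite H3. Qed.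

Lemma rho_pos rho eta rhoE B q : EOSd rho eta rhoE B -> 0 < q -> 0 < rho q.
Proof. intros (H1&H2&H3&H4&H5&H6) Hq. now apply H1. Qed.

Lemma B_nonneg rho eta rhoE B : EOSd rho eta rhoE B -> 0 <= B.
Proof. intros (H1&H2&H3&H4&H5&H6). destruct (H6 1); lra. Qed.

Lemma rho_mono rho eta rhoE B q1 q2 : EOSd rho eta rhoE B -> 0 < q1 -> q1 <= q2 -> rho q1 <= rho q2.
Proof.
  intros H H1 H2. rewrite !(rho_eq _ _ _ _ _ H) by lra.
  apply (rhoE_mono _ _ _ _ _ _ H). apply (eta_pos _ _ _ _ _ H H1). now apply (eta_mono _ _ _ _ _ _ H).
Qed.

Lemma eta_lip rho eta rhoE B x y : EOSd rho eta rhoE B -> 0 < x -> x <= y -> eta y - eta x <= (y - x) / rho x.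
Proof.
  intros H Hx Hxy. pose proof H as (H1&H2&H3&H4&H5&H6).
  pose proof (eta_int rho eta x y H2 Hx ltac:(lra)) as I.
  pose proof (is_RInt_const (V:=R_NormedModule) x y (/ rho x)) as I2.
  unfold scal in I2; simpl in I2; unfold mult in I2; simpl in I2.
  apply (is_RInt_le (fun t => / rho t) (fun _ => / rho x) x y _ _ Hxy I I2).
  intros t Ht. apply Rinv_le_contravar. now apply H1. apply (rho_mono _ _ _ _ _ _ H); lra.
Qed.

Lemma der_lin_minus (g : R -> R) (D e dg : R) : is_derive g e dg -> is_derive (fun e => D * e - g e) e (D - dg).
Proof.
  intros Hg. assert (H1 : is_derive (fun e => D * e) e D).
  { auto_derive; [auto| ring]. }
  pose proof (is_derive_minus _ _ _ _ _ H1 Hg) as H2. exact H2.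
Qed.

Lemma rho_lip rho eta rhoE B q1 q2 x y : EOSd rho eta rhoE B -> 0 < q1 -> q1 <= x -> x <= y -> y <= q2 ->
  rho y - rho x <= (B * rhoE (eta q2 + 1) / (eta q1 / 2)) / rho q1 * (y - x).
Proof.
  intros H Hq1 H1 H2 H3.
  pose proof (eta_pos _ _ _ _ _ H Hq1) as E1.
  set (D := B * rhoE (eta q2 + 1) / (eta q1 / 2)).
  pose proof (B_nonneg _ _ _ _ H) as HB.
  assert (HE2 : 0 < rhoE (eta q2 + 1)).
  { apply (rhoE_pos _ _ _ _ _ H). pose proof (eta_pos _ _ _ _ q2 H ltac:(lra)). lra. }
  assert (HD : 0 <= D) by (unfold D; apply Rmult_le_pos; [apply Rmult_le_pos; lra| left; apply Rinv_0_lt_compat; lra]).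
  assert (Hmono : forall e1 e2, eta q1 / 2 < e1 -> e1 <= e2 -> e2 < eta q2 + 1 -> rhoE e2 - rhoE e1 <= D * (e2 - e1)).
  { intros e1 e2 He1 He12 He2.
    assert (D * e1 - rhoE e1 <= D * e2 - rhoE e2); [|lra].
    apply (mono_le (fun e => D * e - rhoE e) (fun e => D - index_fun rhoE e * rhoE e / e) (Finite (eta q1 / 2)) (Finite (eta q2 + 1))); auto.
    - intros e Ha Hb. simpl in Ha, Hb.
      apply der_lin_minus. apply (rhoE_der _ _ _ _ _ H). lra.
    - intros e Ha Hb. simpl in Ha, Hb.
      assert (He : 0 < e) by lra.
      pose proof H as (H1'&H2'&H3'&H4'&H5'&H6'). destruct (H6' e He) as [I1 I2].
      pose proof (rhoE_pos _ _ _ _ _ H He).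
      assert (rhoE e <= rhoE (eta q2 + 1)) by (apply (rhoE_mono _ _ _ _ _ _ H); lra).
      assert (index_fun rhoE e * rhoE e <= B * rhoE (eta q2 + 1)) by (apply Rmult_le_compat; lra).
      assert (index_fun rhoE e * rhoE e / e <= index_fun rhoE e * rhoE e / (eta q1 / 2)).
      { unfold Rdiv. apply Rmult_le_compat_l; [apply Rmult_le_pos; lra|]. apply Rinv_le_contravar; lra. }
      assert (index_fun rhoE e * rhoE e / (eta q1 / 2) <= D).
      { unfold D, Rdiv. apply Rmult_le_compat_r; [left; apply Rinv_0_lt_compat; lra| lra]. }
      lra. }
  rewrite (rho_eq _ _ _ _ y H), (rho_eq _ _ _ _ x H) by lra.
  pose proof (eta_mono _ _ _ _ x y H ltac:(lra) H2).
  pose proof (eta_mono _ _ _ _ q1 x H ltac:(lra) H1).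
  pose proof (eta_mono _ _ _ _ y q2 H ltac:(lra) H3).
  specialize (Hmono (eta x) (eta y) ltac:(lra) ltac:(lra) ltac:(lra)).
  pose proof (eta_lip _ _ _ _ x y H ltac:(lra) H2) as EL.
  pose proof (rho_pos _ _ _ _ _ H Hq1).
  pose proof (rho_mono _ _ _ _ q1 x H Hq1 H1).
  assert ((y - x) / rho x <= (y - x) / rho q1).
  { unfold Rdiv. apply Rmult_le_compat_l; [lra|]. apply Rinv_le_contravar; lra. }
  assert (D * (eta y - eta x) <= D * ((y - x) / rho q1)) by (apply Rmult_le_compat_l; lra).
  replace (D / rho q1 * (y - x)) with (D * ((y - x) / rho q1)) by (field; lra).
  lra.
Qed.

Definition KR (rho eta rhoE : R -> R) (B q1 q2 : R) := B * rhoE (eta q2 + 1) / (eta q1 / 2) / rho q1.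

Lemma KR_nonneg rho eta rhoE B q1 q2 : EOSd rho eta rhoE B -> 0 < q1 -> q1 <= q2 -> 0 <= KR rho eta rhoE B q1 q2.
Proof.
  intros H H1 H2. unfold KR.
  pose proof (eta_pos _ _ _ _ _ H H1). pose proof (B_nonneg _ _ _ _ H).
  pose proof (rho_pos _ _ _ _ _ H H1).
  assert (0 < rhoE (eta q2 + 1)).
  { apply (rhoE_pos _ _ _ _ _ H). pose proof (eta_pos _ _ _ _ q2 H ltac:(lra)). lra. }
  unfold Rdiv. repeat apply Rmult_le_pos; try lra; left; apply Rinv_0_lt_compat; lra.
Qed.

Lemma rho_lip_abs rho eta rhoE B q1 q2 x y : EOSd rho eta rhoE B -> 0 < q1 -> q1 <= x <= q2 -> q1 <= y <= q2 ->
  Rabs (rho x - rho y) <= KR rho eta rhoE B q1 q2 * Rabs (x - y).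
Proof.
  intros H H1 Hx Hy.
  destruct (Rle_lt_dec x y) as [Hxy|Hxy].
  - pose proof (rho_lip _ _ _ _ q1 q2 x y H H1 ltac:(lra) Hxy ltac:(lra)).
    pose proof (rho_mono _ _ _ _ x y H ltac:(lra) Hxy).
    rewrite Rabs_left1 by lra. rewrite Rabs_left1 by lra. unfold KR. lra.
  - pose proof (rho_lip _ _ _ _ q1 q2 y x H H1 ltac:(lra) ltac:(lra) ltac:(lra)).
    pose proof (rho_mono _ _ _ _ y x H ltac:(lra) ltac:(lra)).
    rewrite Rabs_right by lra. rewrite Rabs_right by lra. unfold KR. lra.
Qed.

Lemma rho_cont rho eta rhoE B q : EOSd rho eta rhoE B -> 0 < q -> continuous rho q.
Proof.
  intros H Hq. apply (lip_cont rho q (KR rho eta rhoE B (q/2) (2*q))).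
  - apply KR_nonneg; auto; lra.
  - exists (q/2). split; [lra|]. intros y Hy. apply Rabs_def2 in Hy.
    apply rho_lip_abs; auto; lra.
Qed.

Lemma eta_der rho eta rhoE B q : EOSd rho eta rhoE B -> 0 < q -> is_derive eta q (/ rho q).
Proof.
  intros H Hq. pose proof H as (H1&H2&H3&H4&H5&H6).
  assert (D : is_derive (fun y => eta y - eta (q/2)) q (/ rho q)).
  { apply (is_derive_RInt (fun x => / rho x) (fun y => eta y - eta (q/2)) (q/2) q).
    - exists (mkposreal (q/2) ltac:(lra)). intros y Hy.
      unfold ball in Hy; simpl in Hy; unfold AbsRing_ball, abs, minus, plus, opp in Hy; simpl in Hy.
      apply Rabs_def2 in Hy. apply eta_int; auto; lra.
    - apply continuous_Rinv_comp. apply (rho_cont _ _ _ _ _ H Hq). pose proof (rho_pos _ _ _ _ _ H Hq). lra. }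
  apply (is_derive_ext (fun y => (eta y - eta (q/2)) + eta (q/2)) eta).
  { intros t. unfold Rminus. rewrite Rplus_assoc, Rplus_opp_l, Rplus_0_r. reflexivity. }
  replace (/ rho q) with (/ rho q + 0) by ring.
  apply (is_derive_plus (fun y => eta y - eta (q/2)) (fun _ => eta (q/2))). exact D. exact (is_derive_const (K:=R_AbsRing) (V:=R_NormedModule) (eta (q/2)) q).
Qed.

Lemma exp_mono_le x y : x <= y -> exp x <= exp y.
Proof. intros H. destruct (Req_dec x y) as [->|Hn]; [lra|]. left; apply exp_increasing; lra. Qed.

Lemma rhoE_lower rho eta rhoE B n0 a0 : EOSd rho eta rhoE B -> n0 <= 3 -> 0 < a0 ->
  (exists C d, 0 < d /\ forall e, 0 < e < d -> Rabs (index_fun rhoE e - n0) <= C * Rpower e a0) ->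
  forall E1, 0 < E1 -> exists c, 0 < c /\ forall e, 0 < e <= E1 -> c * e ^ 3 <= rhoE e.
Proof.
  intros H Hn0 Ha0 [C [d [Hd HC]]] E1 HE1.
  pose proof (B_nonneg _ _ _ _ H) as HB.
  set (Rd := exp (a0 * ln d)).
  assert (HRd : 0 < Rd) by apply exp_pos.
  set (K := (Rabs C + B / Rd) / a0).
  assert (HKa : K * a0 = Rabs C + B / Rd) by (unfold K; field; lra).
  assert (HBRd : 0 <= B / Rd) by (unfold Rdiv; apply Rmult_le_pos; [lra| left; apply Rinv_0_lt_compat; lra]).
  assert (HK : 0 <= K).
  { unfold K. unfold Rdiv at 1. apply Rmult_le_pos. pose proof (Rabs_pos C); lra. left; apply Rinv_0_lt_compat; lra. }
  set (phi := fun e => ln (rhoE e) - 3 * ln e - K * exp (a0 * ln e)).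
  set (dphi := fun e => (index_fun rhoE e - 3 - K * a0 * exp (a0 * ln e)) / e).
  assert (Hder : forall e, 0 < e -> is_derive phi e (dphi e)).
  { intros e He. pose proof (rhoE_pos _ _ _ _ _ H He) as Hp.
    pose proof H as (H1&H2&H3&H4&H5&H6).
    unfold phi. auto_derive.
    - repeat split; auto.
    - unfold dphi, index_fun. change (Derive (fun x => rhoE x) e) with (Derive rhoE e). field. split; lra. }
  assert (Hneg : forall e, 0 < e -> dphi e <= 0).
  { intros e He. unfold dphi.
    assert (index_fun rhoE e - 3 <= K * a0 * exp (a0 * ln e)); [|
      unfold Rdiv; apply Rmult_le_0_r; [lra| left; apply Rinv_0_lt_compat; lra]].
    rewrite HKa. pose proof (exp_pos (a0 * ln e)) as Hex.
    destruct (Rlt_le_dec e d) as [Hed|Hed].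
    - specialize (HC e (conj He Hed)). unfold Rpower in HC.
      pose proof (Rabs_pos C). pose proof (Rle_abs C).
      pose proof (Rle_abs (index_fun rhoE e - n0)).
      assert (C * exp (a0 * ln e) <= Rabs C * exp (a0 * ln e)) by (apply Rmult_le_compat_r; lra).
      assert (0 <= B / Rd * exp (a0 * ln e)) by (apply Rmult_le_pos; lra).
      lra.
    - pose proof H as (H1&H2&H3&H4&H5&H6). destruct (H6 e He).
      assert (Rd <= exp (a0 * ln e)).
      { apply exp_mono_le. apply Rmult_le_compat_l; [lra|]. apply ln_le; lra. }
      assert (B <= B / Rd * exp (a0 * ln e)).
      { replace B with (B / Rd * Rd) at 1 by (field; lra). apply Rmult_le_compat_l; lra. }
      assert (0 <= Rabs C * exp (a0 * ln e)) by (apply Rmult_le_pos; [apply Rabs_pos| lra]).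
      lra. }
  exists (exp (phi E1)). split; [apply exp_pos|].
  intros e [He HeE].
  assert (Hph : phi E1 <= phi e).
  { apply (mono_ge phi dphi (Finite 0) p_infty).
    - intros x Hx _. now apply Hder.
    - intros x Hx _. now apply Hneg.
    - simpl; lra.
    - lra.
    - simpl; auto. }
  pose proof (rhoE_pos _ _ _ _ _ H He) as Hp.
  unfold phi in Hph at 2.
  assert (phi E1 + ln (e ^ 3) <= ln (rhoE e)).
  { rewrite ln_pow by lra. simpl (INR 3).
    assert (0 <= K * exp (a0 * ln e)) by (apply Rmult_le_pos; [lra| left; apply exp_pos]).
    lra. }
  apply exp_mono_le in H0. rewrite exp_plus, !exp_ln in H0; auto.
  apply pow_lt; lra.
Qed.

Lemma mono_le_cl (f df : R -> R) x y : x <= y -> (forall z, x <= z <= y -> is_derive f z (df z)) ->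
  (forall z, x <= z <= y -> 0 <= df z) -> f x <= f y.
Proof.
  intros Hxy Hd Hp.
  destruct (Req_dec x y) as [->|Hne]; [lra|].
  destruct (MVT_gen f x y df) as [c [Hc Heq]].
  - intros z Hz. rewrite Rmin_left in Hz by lra. rewrite Rmax_right in Hz by lra. apply Hd; lra.
  - intros z Hz. rewrite Rmin_left in Hz by lra. rewrite Rmax_right in Hz by lra. eapply der_cont. apply Hd; lra.
  - rewrite Rmin_left in Hc by lra. rewrite Rmax_right in Hc by lra.
    specialize (Hp c Hc). nra.
Qed.

Lemma mono_ge_cl (f df : R -> R) x y : x <= y -> (forall z, x <= z <= y -> is_derive f z (df z)) ->
  (forall z, x <= z <= y -> df z <= 0) -> f y <= f x.
Proof.
  intros Hxy Hd Hp.
  assert (- f x <= - f y); [|lra].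
  apply (mono_le_cl (fun z => - f z) (fun z => - df z)); auto.
  - intros z Hz. exact (is_derive_opp f z (df z) (Hd z Hz)).
  - intros z Hz. specialize (Hp z Hz). lra.
Qed.

Lemma mono_le_inf (f df : R -> R) r0 : (forall x, r0 < x -> is_derive f x (df x)) ->
  (forall x, r0 < x -> 0 <= df x) -> forall x y, r0 < x -> x <= y -> f x <= f y.
Proof.
  intros H1 H2 x y Hx Hxy. apply (mono_le f df (Finite r0) p_infty).
  - intros z Hz _. now apply H1.
  - intros z Hz _. now apply H2.
  - exact Hx.
  - exact Hxy.
  - simpl; auto.
Qed.

Lemma mono_ge_inf (f df : R -> R) r0 : (forall x, r0 < x -> is_derive f x (df x)) ->
  (forall x, r0 < x -> df x <= 0) -> forall x y, r0 < x -> x <= y -> f y <= f x.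
Proof.
  intros H1 H2 x y Hx Hxy. apply (mono_ge f df (Finite r0) p_infty).
  - intros z Hz _. now apply H1.
  - intros z Hz _. now apply H2.
  - exact Hx.
  - exact Hxy.
  - simpl; auto.
Qed.

Lemma Derive_val (g : R -> R) (x l : R) : is_derive g x l -> Derive (fun y : R => g y) x = l.
Proof. intros H. now apply is_derive_unique. Qed.

Lemma der_eq (f : R -> R) x l l' : is_derive f x l -> l = l' -> is_derive f x l'.
Proof. intros H <-. exact H. Qed.

Lemma no_global rho eta rhoE B m p r0 :
  EOSd rho eta rhoE B ->
  (forall E1, 0 < E1 -> exists c, 0 < c /\ forall e, 0 < e <= E1 -> c * e ^ 3 <= rhoE e) ->
  fluid_solution rho m p r0 p_infty -> False.
Proof.
  intros H Hlow [Hr0 [_ Hsol]].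
  assert (Hs : forall r, r0 < r -> 0 < p r /\ 0 < m r /\ is_derive m r (4 * PI * r ^ 2 * rho (p r)) /\
    is_derive p r (- (m r * rho (p r)) / r ^ 2)) by (intros r Hr; apply Hsol; simpl; auto).
  clear Hsol.
  set (Et := fun r => eta (p r)).
  assert (HEt : forall r, r0 < r -> is_derive Et r (- m r / r ^ 2)).
  { intros r Hr. destruct (Hs r Hr) as (Hp&Hm&Hdm&Hdp).
    pose proof (is_derive_comp eta p r _ _ (eta_der _ _ _ _ _ H Hp) Hdp) as D.
    apply (der_eq _ _ _ _ D). unfold scal; simpl; unfold mult; simpl.
    pose proof (rho_pos _ _ _ _ _ H Hp). field. split; lra. }
  assert (Hm' : forall r, r0 < r -> is_derive m r (4 * PI * r ^ 2 * rhoE (Et r))).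
  { intros r Hr. destruct (Hs r Hr) as (Hp&Hm&Hdm&Hdp). unfold Et.
    rewrite <- (rho_eq _ _ _ _ _ H Hp). exact Hdm. }
  assert (HEtpos : forall r, r0 < r -> 0 < Et r).
  { intros r Hr. apply (eta_pos _ _ _ _ _ H). apply Hs; auto. }
  assert (HmP : forall r, r0 < r -> 0 < m r) by (intros r Hr; apply Hs; auto).
  assert (Hrhopos : forall r, r0 < r -> 0 < rhoE (Et r)).
  { intros r Hr. apply (rhoE_pos _ _ _ _ _ H). now apply HEtpos. }
  set (r1 := r0 + 1).
  assert (Hr1 : r0 < r1) by (unfold r1; lra).
  assert (Hminc : forall x y, r0 < x -> x <= y -> m x <= m y).
  { intros x y Hx Hxy. apply (mono_le_inf m (fun r => 4 * PI * r ^ 2 * rhoE (Et r)) r0); auto.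
    intros z Hz. pose proof (Hrhopos z Hz). pose proof PI_RGT_0.
    apply Rmult_le_pos; [|lra]. apply Rmult_le_pos; [lra|]. apply pow_le; lra. }
  assert (Hedec : forall x y, r0 < x -> x <= y -> Et y <= Et x).
  { intros x y Hx Hxy. apply (mono_ge_inf Et (fun r => - m r / r ^ 2) r0); auto.
    intros z Hz. pose proof (HmP z Hz). unfold Rdiv.
    assert (0 < / z ^ 2) by (apply Rinv_0_lt_compat; apply pow_lt; lra). nra. }
  set (f := fun r => Et r - m r / r).
  assert (Hf : forall r, r0 < r -> is_derive f r (- (4 * PI * r ^ 2 * rhoE (Et r)) / r)).
  { intros r Hr. pose proof (HEt r Hr) as D1. pose proof (Hm' r Hr) as D2.
    unfold f. auto_derive.
    - repeat split; try (eexists; eauto). lra.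
    - rewrite (Derive_val Et r _ D1), (Derive_val m r _ D2). field. lra. }
  assert (Hfdec : forall x y, r0 < x -> x <= y -> f y <= f x).
  { intros x y Hx Hxy. apply (mono_ge_inf f _ r0 Hf); auto.
    intros z Hz. pose proof (Hrhopos z Hz). pose proof PI_RGT_0.
    assert (0 <= 4 * PI * z ^ 2 * rhoE (Et z)).
    { apply Rmult_le_pos; [|lra]. apply Rmult_le_pos; [lra|]. apply pow_le; lra. }
    unfold Rdiv. assert (0 < / z) by (apply Rinv_0_lt_compat; lra). nra. }
  set (v := fun r => r * Et r).
  assert (Hv : forall r, r0 < r -> is_derive v r (f r)).
  { intros r Hr. pose proof (HEt r Hr) as D1. unfold v, f. auto_derive.
    - eexists; eauto.
    - rewrite (Derive_val Et _ _ D1). field. lra. }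
  destruct (classic (exists r2, r1 <= r2 /\ f r2 < 0)) as [[r2 [Hr2 Hfr2]]|Hall].
  -
    set (k := - f r2).
    assert (Hk : 0 < k) by (unfold k; lra).
    set (h := fun r => v r + k * r).
    assert (Hh : forall x y, r2 <= x -> x <= y -> h y <= h x).
    { intros x y Hx Hxy. apply (mono_ge_cl h (fun r => f r + k)); try lra.
      - intros z Hz. pose proof (Hv z ltac:(unfold r1 in *; lra)) as D. unfold h. auto_derive.
        + eexists; eauto.
        + rewrite (Derive_val v z _ D). ring.
      - intros z Hz. pose proof (Hfdec r2 z ltac:(unfold r1 in *; lra) ltac:(lra)). unfold k. lra. }
    assert (Hvr2 : 0 < v r2).
    { unfold v. pose proof (HEtpos r2 ltac:(unfold r1 in *; lra)). apply Rmult_lt_0_compat; [unfold r1 in *; lra| lra]. }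
    set (y := r2 + v r2 / k + 1).
    assert (Hy : r2 <= y) by (unfold y; assert (0 < v r2 / k) by (apply Rdiv_lt_0_compat; lra); lra).
    specialize (Hh r2 y (Rle_refl _) Hy). unfold h in Hh.
    assert (Hvy : 0 < v y).
    { unfold v. pose proof (HEtpos y ltac:(unfold r1 in *; lra)). apply Rmult_lt_0_compat; [unfold r1 in *; lra| lra]. }
    assert (k * (y - r2) = v r2 + k) by (unfold y; field; lra).
    lra.
  -
    assert (Hfpos : forall r, r1 <= r -> m r / r <= Et r).
    { intros r Hr. destruct (Rlt_le_dec (f r) 0) as [Hlt|Hge].
      - exfalso. apply Hall. exists r. auto.
      - unfold f in Hge. lra. }
    destruct (Hlow (Et r1) (HEtpos r1 Hr1)) as [c [Hc Hcl]].
    assert (Hrho3 : forall r, r1 <= r -> c * (m r / r) ^ 3 <= rhoE (Et r)).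
    { intros r Hr. assert (Hr' : r0 < r) by (unfold r1 in *; lra).
      eapply Rle_trans; [|apply Hcl; split; [apply HEtpos; auto| apply Hedec; auto]].
      apply Rmult_le_compat_l; [lra|]. apply pow_incr. split; [|apply Hfpos; auto].
      unfold Rdiv. apply Rmult_le_pos; [left; apply HmP; auto| left; apply Rinv_0_lt_compat; lra]. }
    set (G := fun r => - / (m r ^ 2) - 8 * PI * c * ln r).
    set (dG := fun r => 8 * PI * (r ^ 3 * rhoE (Et r) - c * m r ^ 3) / (r * m r ^ 3)).
    set (m1 := m r1).
    assert (Hm1 : 0 < m1) by (apply HmP; auto).
    set (RR := r1 * exp (/ (8 * PI * c * m1 ^ 2))).
    assert (HRR : r1 <= RR).
    { unfold RR. assert (1 <= exp (/ (8 * PI * c * m1 ^ 2))).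
      { rewrite <- exp_0. apply exp_mono_le. left. apply Rinv_0_lt_compat.
        pose proof PI_RGT_0. apply Rmult_lt_0_compat; [apply Rmult_lt_0_compat; lra| apply pow_lt; lra]. }
      nra. }
    assert (HG : G r1 <= G RR).
    { apply (mono_le_cl G dG r1 RR HRR).
      - intros z Hz. assert (Hz' : r0 < z) by (unfold r1 in *; lra).
        pose proof (Hm' z Hz') as D. pose proof (HmP z Hz').
        unfold G. auto_derive.
        + repeat split; try (eexists; eauto); try lra. rewrite Rmult_1_r. apply Rgt_not_eq. nra.
        + rewrite (Derive_val m z _ D). unfold dG. field. split; lra.
      - intros z Hz. assert (Hz' : r0 < z) by (unfold r1 in *; lra). pose proof (HmP z Hz').
        specialize (Hrho3 z ltac:(lra)).
        assert (c * m z ^ 3 <= z ^ 3 * rhoE (Et z)).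
        { replace (c * m z ^ 3) with (z ^ 3 * (c * (m z / z) ^ 3)) by (field; lra).
          apply Rmult_le_compat_l; [apply pow_le; lra| exact Hrho3]. }
        unfold dG. pose proof PI_RGT_0. apply Rmult_le_pos; [|left; apply Rinv_0_lt_compat; apply Rmult_lt_0_compat; [lra| apply pow_lt; lra]].
        apply Rmult_le_pos; lra. }
    unfold G in HG.
    assert (ln RR = ln r1 + / (8 * PI * c * m1 ^ 2)).
    { unfold RR. rewrite ln_mult, ln_exp; [reflexivity| lra| apply exp_pos]. }
    rewrite H0 in HG.
    assert (8 * PI * c * (ln r1 + / (8 * PI * c * m1 ^ 2)) = 8 * PI * c * ln r1 + / m1 ^ 2).
    { pose proof PI_RGT_0. field. split; lra. }
    fold m1 in HG. rewrite H1 in HG.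
    assert (0 < / m RR ^ 2). { apply Rinv_0_lt_compat. apply pow_lt. apply HmP. unfold r1 in *; lra. }
    lra.
Qed.
Lemma small_zero' x : (forall eps, 0 < eps -> Rabs x < eps) -> x = 0.
Proof.
  intros H. destruct (Req_dec x 0) as [|Hn]; [auto|].
  specialize (H (Rabs x) (Rabs_pos_lt x Hn)). lra.
Qed.

Lemma lip_cont' (f : R -> R) (x K : R) : 0 <= K -> (forall y, Rabs (f y - f x) <= K * Rabs (y - x)) -> continuous f x.
Proof.
  intros HK H.
  apply filterlim_locally. intros eps.
  exists (mkposreal (eps / (K + 1)) ltac:(apply Rdiv_lt_0_compat; [apply cond_pos|lra])).
  intros y Hy. simpl in Hy. unfold ball in Hy; simpl in Hy; unfold AbsRing_ball, abs, minus, plus, opp in Hy; simpl in Hy.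
  unfold ball; simpl; unfold AbsRing_ball, abs, minus, plus, opp; simpl.
  specialize (H y). unfold Rminus in *.
  apply Rle_lt_trans with (K * Rabs (y + - x)); [exact H|].
  assert (0 < eps) by apply cond_pos.
  assert (Rabs (y + - x) * (K+1) < eps).
  { apply Rmult_lt_reg_r with (/ (K+1)). apply Rinv_0_lt_compat; lra.
    rewrite Rmult_assoc, Rinv_r, Rmult_1_r by lra. exact Hy. }
  pose proof (Rabs_pos (y + - x)). nra.
Qed.

Lemma geo_small C eps : 0 < eps -> exists N, forall n, (N <= n)%nat -> C * (1/2) ^ n < eps.
Proof.
  intros He.
  destruct (pow_lt_1_zero (1/2) ltac:(rewrite Rabs_right; lra) (eps / (Rabs C + 1)) ltac:(apply Rdiv_lt_0_compat; [lra| pose proof (Rabs_pos C); lra])) as [N HN].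
  exists N. intros n Hn. specialize (HN n Hn).
  rewrite Rabs_right in HN by (left; apply pow_lt; lra).
  assert (0 < (1/2)^n) by (apply pow_lt; lra).
  assert ((1/2)^n * (Rabs C + 1) < eps).
  { apply Rmult_lt_reg_r with (/ (Rabs C + 1)). apply Rinv_0_lt_compat; pose proof (Rabs_pos C); lra.
    rewrite Rmult_assoc, Rinv_r, Rmult_1_r by (pose proof (Rabs_pos C); lra). exact HN. }
  pose proof (Rle_abs C). nra.
Qed.

Lemma abs_RInt_bound (F : R -> R) Gm u w : (forall s, continuous F s) -> (forall s, Rabs (F s) <= Gm) ->
  Rabs (RInt F u w) <= Gm * Rabs (w - u).
Proof.
  intros Hc Hb.
  destruct (Rle_lt_dec u w) as [H|H].
  - rewrite (Rabs_right (w - u)) by lra. rewrite Rmult_comm.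
    apply abs_RInt_le_const; auto. apply (ex_RInt_continuous (V:=R_CompleteNormedModule)). intros; auto.
  - rewrite <- opp_RInt_swap by (apply (ex_RInt_continuous (V:=R_CompleteNormedModule)); intros; auto).
    unfold opp; simpl. rewrite Rabs_Ropp.
    rewrite (Rabs_left (w - u)) by lra. replace (- (w - u)) with (u - w) by ring. rewrite Rmult_comm.
    apply abs_RInt_le_const; auto; try lra. apply (ex_RInt_continuous (V:=R_CompleteNormedModule)). intros; auto.
Qed.

Lemma int_lip (F : R -> R) Gm a t t' : (forall s, continuous F s) -> (forall s, Rabs (F s) <= Gm) ->
  Rabs (RInt F a t - RInt F a t') <= Gm * Rabs (t - t').
Proof.
  intros Hc Hb.
  assert (E : forall u w, ex_RInt F u w) by (intros; apply (ex_RInt_continuous (V:=R_CompleteNormedModule)); intros; auto).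
  pose proof (RInt_Chasles F a t' t (E _ _) (E _ _)) as Ch. unfold plus in Ch; simpl in Ch.
  assert (Ch' : RInt F a t - RInt F a t' = RInt F t' t) by (rewrite <- Ch; change (RInt F a t' + RInt F t' t - RInt F a t' = RInt F t' t); ring).
  rewrite Ch'.
  apply abs_RInt_bound; auto.
Qed.

Fixpoint pic (G1 G2 : R -> R -> R -> R) (a x0 q0 : R) (k : nat) : (R -> R) * (R -> R) :=
  match k with
  | O => (fun _ => x0, fun _ => q0)
  | S k' => let XQ := pic G1 G2 a x0 q0 k' in
      (fun t => x0 + RInt (fun s => G1 s (fst XQ s) (snd XQ s)) a t,
       fun t => q0 + RInt (fun s => G2 s (fst XQ s) (snd XQ s)) a t)
  end.

Definition PicHyp (G1 G2 : R -> R -> R -> R) (Gm K : R) : Prop :=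
  0 <= Gm /\ 0 <= K /\
  (forall s x q, Rabs (G1 s x q) <= Gm /\ Rabs (G2 s x q) <= Gm) /\
  (forall s x q x' q', Rabs (G1 s x q - G1 s x' q') <= K * (Rabs (x - x') + Rabs (q - q')) /\
                       Rabs (G2 s x q - G2 s x' q') <= K * (Rabs (x - x') + Rabs (q - q'))) /\
  (forall (X Q : R -> R) t, continuous X t -> continuous Q t ->
     continuous (fun s => G1 s (X s) (Q s)) t /\ continuous (fun s => G2 s (X s) (Q s)) t).

Lemma pic_reg G1 G2 Gm K a x0 q0 : PicHyp G1 G2 Gm K -> forall k,
  (forall t, continuous (fst (pic G1 G2 a x0 q0 k)) t /\ continuous (snd (pic G1 G2 a x0 q0 k)) t).
Proof.
  intros (HGm&HK&Hb&Hl&Hc) k. induction k as [|k IH]; intros t.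
  - simpl. split; apply continuous_const.
  - simpl. set (X := fst (pic G1 G2 a x0 q0 k)). set (Q := snd (pic G1 G2 a x0 q0 k)).
    assert (HC1 : forall s, continuous (fun s => G1 s (X s) (Q s)) s) by (intros s; apply Hc; apply IH).
    assert (HC2 : forall s, continuous (fun s => G2 s (X s) (Q s)) s) by (intros s; apply Hc; apply IH).
    split; apply (lip_cont' _ t Gm HGm); intros y.
    + replace (x0 + RInt (fun s => G1 s (X s) (Q s)) a y - (x0 + RInt (fun s => G1 s (X s) (Q s)) a t))
        with (RInt (fun s => G1 s (X s) (Q s)) a y - RInt (fun s => G1 s (X s) (Q s)) a t) by ring.
      apply int_lip; auto. intros s; apply Hb.
    + replace (q0 + RInt (fun s => G2 s (X s) (Q s)) a y - (q0 + RInt (fun s => G2 s (X s) (Q s)) a t))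
        with (RInt (fun s => G2 s (X s) (Q s)) a y - RInt (fun s => G2 s (X s) (Q s)) a t) by ring.
      apply int_lip; auto. intros s; apply Hb.
Qed.

Lemma pic_lip G1 G2 Gm K a x0 q0 : PicHyp G1 G2 Gm K -> forall k t t',
  Rabs (fst (pic G1 G2 a x0 q0 k) t - fst (pic G1 G2 a x0 q0 k) t') <= Gm * Rabs (t - t') /\
  Rabs (snd (pic G1 G2 a x0 q0 k) t - snd (pic G1 G2 a x0 q0 k) t') <= Gm * Rabs (t - t').
Proof.
  intros H k t t'. pose proof (pic_reg _ _ _ _ a x0 q0 H) as Hreg. destruct H as (HGm&HK&Hb&Hl&Hc).
  destruct k as [|k].
  - simpl. rewrite !Rminus_diag, Rabs_R0. split; apply Rmult_le_pos; auto; apply Rabs_pos.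
  - simpl. set (X := fst (pic G1 G2 a x0 q0 k)). set (Q := snd (pic G1 G2 a x0 q0 k)).
    assert (HC1 : forall s, continuous (fun s => G1 s (X s) (Q s)) s) by (intros s; apply Hc; apply Hreg).
    assert (HC2 : forall s, continuous (fun s => G2 s (X s) (Q s)) s) by (intros s; apply Hc; apply Hreg).
    split.
    + replace (x0 + RInt (fun s => G1 s (X s) (Q s)) a t - (x0 + RInt (fun s => G1 s (X s) (Q s)) a t'))
        with (RInt (fun s => G1 s (X s) (Q s)) a t - RInt (fun s => G1 s (X s) (Q s)) a t') by ring.
      apply int_lip; auto. intros s; apply Hb.
    + replace (q0 + RInt (fun s => G2 s (X s) (Q s)) a t - (q0 + RInt (fun s => G2 s (X s) (Q s)) a t'))
        with (RInt (fun s => G2 s (X s) (Q s)) a t - RInt (fun s => G2 s (X s) (Q s)) a t') by ring.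
      apply int_lip; auto. intros s; apply Hb.
Qed.

Lemma contr G1 G2 Gm K (X Q Y Z : R -> R) a c delta : PicHyp G1 G2 Gm K ->
  (forall s, a <= s <= c -> continuous X s /\ continuous Q s /\ continuous Y s /\ continuous Z s) ->
  (forall s, a <= s <= c -> Rabs (X s - Y s) + Rabs (Q s - Z s) <= delta) ->
  forall t, a <= t <= c ->
  Rabs (RInt (fun s => G1 s (X s) (Q s)) a t - RInt (fun s => G1 s (Y s) (Z s)) a t) <= (t - a) * (K * delta) /\
  Rabs (RInt (fun s => G2 s (X s) (Q s)) a t - RInt (fun s => G2 s (Y s) (Z s)) a t) <= (t - a) * (K * delta).
Proof.
  intros (HGm&HK&Hb&Hl&Hc) Hcont Hd t Ht.
  assert (Ex : forall (G : R -> R -> R -> R) (U V : R -> R),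
     (forall s, a <= s <= c -> continuous U s /\ continuous V s) ->
     (forall (X Q : R -> R) t, continuous X t -> continuous Q t -> continuous (fun s => G s (X s) (Q s)) t) ->
     ex_RInt (fun s => G s (U s) (V s)) a t).
  { intros G U V HUV HG. apply (ex_RInt_continuous (V:=R_CompleteNormedModule)).
    intros z Hz. rewrite Rmin_left in Hz by lra. rewrite Rmax_right in Hz by lra.
    apply HG; apply HUV; lra. }
  assert (HC1 : forall (X Q : R -> R) t, continuous X t -> continuous Q t -> continuous (fun s => G1 s (X s) (Q s)) t)
    by (intros; apply Hc; auto).
  assert (HC2 : forall (X Q : R -> R) t, continuous X t -> continuous Q t -> continuous (fun s => G2 s (X s) (Q s)) t)
    by (intros; apply Hc; auto).
  assert (HXQ : forall s, a <= s <= c -> continuous X s /\ continuous Q s) by (intros s Hs; split; apply Hcont; auto).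
  assert (HYZ : forall s, a <= s <= c -> continuous Y s /\ continuous Z s) by (intros s Hs; split; apply Hcont; auto).
  split.
  - rewrite <- (RInt_minus (V:=R_CompleteNormedModule)) by (apply Ex; auto).
    apply abs_RInt_le_const; [lra| apply (ex_RInt_minus (V:=R_CompleteNormedModule)); apply Ex; auto|].
    intros s Hs. unfold minus, plus, opp; simpl.
    eapply Rle_trans; [apply (proj1 (Hl s (X s) (Q s) (Y s) (Z s)))|].
    apply Rmult_le_compat_l; auto. apply Hd; lra.
  - rewrite <- (RInt_minus (V:=R_CompleteNormedModule)) by (apply Ex; auto).
    apply abs_RInt_le_const; [lra| apply (ex_RInt_minus (V:=R_CompleteNormedModule)); apply Ex; auto|].
    intros s Hs. unfold minus, plus, opp; simpl.
    eapply Rle_trans; [apply (proj2 (Hl s (X s) (Q s) (Y s) (Z s)))|].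
    apply Rmult_le_compat_l; auto. apply Hd; lra.
Qed.

Lemma pm (x y : R) : x + y - x = y.
Proof. ring. Qed.

Lemma pm2 (x y z : R) : x + y - (x + z) = y - z.
Proof. ring. Qed.

Lemma step_bound G1 G2 Gm K a x0 q0 h : PicHyp G1 G2 Gm K -> 0 < h -> K * h <= 1/4 ->
  forall k t, a <= t <= a + h ->
  Rabs (fst (pic G1 G2 a x0 q0 (S k)) t - fst (pic G1 G2 a x0 q0 k) t) +
  Rabs (snd (pic G1 G2 a x0 q0 (S k)) t - snd (pic G1 G2 a x0 q0 k) t) <= 2 * Gm * h * (1/2) ^ k.
Proof.
  intros H Hh HKh. pose proof (pic_reg _ _ _ _ a x0 q0 H) as Hreg. pose proof H as (HGm&HK&Hb&Hl&Hc).
  induction k as [|k IH]; intros t Ht.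
  - simpl. rewrite !pm.
    assert (C1 : forall s, continuous (fun s => G1 s x0 q0) s) by (intros s; apply (Hc (fun _ => x0) (fun _ => q0)); apply continuous_const).
    assert (C2 : forall s, continuous (fun s => G2 s x0 q0) s) by (intros s; apply (Hc (fun _ => x0) (fun _ => q0)); apply continuous_const).
    pose proof (abs_RInt_bound (fun s : R => G1 s x0 q0) Gm a t C1 (fun s => proj1 (Hb s x0 q0))).
    pose proof (abs_RInt_bound (fun s : R => G2 s x0 q0) Gm a t C2 (fun s => proj2 (Hb s x0 q0))).
    rewrite (Rabs_right (t - a)) in H0, H1 by lra. nra.
  - change (fst (pic G1 G2 a x0 q0 (S (S k))) t) with
      (x0 + RInt (fun s => G1 s (fst (pic G1 G2 a x0 q0 (S k)) s) (snd (pic G1 G2 a x0 q0 (S k)) s)) a t).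
    change (snd (pic G1 G2 a x0 q0 (S (S k))) t) with
      (q0 + RInt (fun s => G2 s (fst (pic G1 G2 a x0 q0 (S k)) s) (snd (pic G1 G2 a x0 q0 (S k)) s)) a t).
    change (fst (pic G1 G2 a x0 q0 (S k)) t) with
      (x0 + RInt (fun s => G1 s (fst (pic G1 G2 a x0 q0 k) s) (snd (pic G1 G2 a x0 q0 k) s)) a t).
    change (snd (pic G1 G2 a x0 q0 (S k)) t) with
      (q0 + RInt (fun s => G2 s (fst (pic G1 G2 a x0 q0 k) s) (snd (pic G1 G2 a x0 q0 k) s)) a t).
    destruct (contr G1 G2 Gm K (fst (pic G1 G2 a x0 q0 (S k))) (snd (pic G1 G2 a x0 q0 (S k)))
      (fst (pic G1 G2 a x0 q0 k)) (snd (pic G1 G2 a x0 q0 k)) a (a + h) (2 * Gm * h * (1/2) ^ k) H) with (t := t)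
      as [E1 E2]; auto.
    { intros s Hs. repeat split; apply Hreg. }
    rewrite !pm2.
    assert (0 <= 2 * Gm * h * (1/2) ^ k) by (apply Rmult_le_pos; [nra| apply pow_le; lra]).
    assert ((t - a) * (K * (2 * Gm * h * (1 / 2) ^ k)) <= h * K * (2 * Gm * h * (1 / 2) ^ k)).
    { rewrite <- Rmult_assoc. apply Rmult_le_compat_r; auto. nra. }
    simpl (_ ^ S k). nra.
Qed.

Lemma tail_bound (u v : nat -> R) (lu lv : R) k C : is_lim_seq u lu -> is_lim_seq v lv ->
  (forall j, Rabs (u (k + j)%nat - u k) + Rabs (v (k + j)%nat - v k) <= C) ->
  Rabs (lu - u k) + Rabs (lv - v k) <= C.
Proof.
  intros Hu Hv Hb.
  assert (Hw : is_lim_seq (fun j => Rabs (u (j + k)%nat - u k) + Rabs (v (j + k)%nat - v k)) (Rabs (lu - u k) + Rabs (lv - v k))).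
  { apply is_lim_seq_plus'.
    - apply (is_lim_seq_abs _ (Finite (lu - u k))). apply is_lim_seq_minus'; [|apply is_lim_seq_const].
      now apply (is_lim_seq_incr_n u k lu).
    - apply (is_lim_seq_abs _ (Finite (lv - v k))). apply is_lim_seq_minus'; [|apply is_lim_seq_const].
      now apply (is_lim_seq_incr_n v k lv). }
  assert (Hb' : forall j, Rabs (u (j + k)%nat - u k) + Rabs (v (j + k)%nat - v k) <= C)
    by (intros j; rewrite Nat.add_comm; apply Hb).
  pose proof (is_lim_seq_le _ (fun _ => C) _ _ Hb' Hw (is_lim_seq_const C)) as L.
  simpl in L. exact L.
Qed.

Lemma cauchy_bound G1 G2 Gm K a x0 q0 h : PicHyp G1 G2 Gm K -> 0 < h -> K * h <= 1/4 ->
  forall j k t, a <= t <= a + h ->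
  Rabs (fst (pic G1 G2 a x0 q0 (k + j)) t - fst (pic G1 G2 a x0 q0 k) t) +
  Rabs (snd (pic G1 G2 a x0 q0 (k + j)) t - snd (pic G1 G2 a x0 q0 k) t) <=
    2 * (2 * Gm * h) * (1/2) ^ k - 2 * (2 * Gm * h) * (1/2) ^ (k + j).
Proof.
  intros H Hh HKh j. induction j as [|j IH]; intros k t Ht.
  - rewrite Nat.add_0_r, !Rminus_diag, Rabs_R0. lra.
  - rewrite Nat.add_succ_r.
    pose proof (step_bound G1 G2 Gm K a x0 q0 h H Hh HKh (k + j) t Ht) as HS.
    specialize (IH k t Ht).
    set (A1 := fst (pic G1 G2 a x0 q0 (S (k + j))) t). set (A2 := fst (pic G1 G2 a x0 q0 (k + j)) t).
    set (A3 := fst (pic G1 G2 a x0 q0 k) t).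
    set (B1 := snd (pic G1 G2 a x0 q0 (S (k + j))) t). set (B2 := snd (pic G1 G2 a x0 q0 (k + j)) t).
    set (B3 := snd (pic G1 G2 a x0 q0 k) t).
    fold A1 A2 B1 B2 in HS. fold A2 A3 B2 B3 in IH.
    pose proof (Rabs_triang (A1 - A2) (A2 - A3)). pose proof (Rabs_triang (B1 - B2) (B2 - B3)).
    replace (A1 - A2 + (A2 - A3)) with (A1 - A3) in H0 by ring.
    replace (B1 - B2 + (B2 - B3)) with (B1 - B3) in H1 by ring.
    simpl (_ ^ S (k + j)). lra.
Qed.

Lemma seq_cauchy (u : nat -> R) C : (forall k j, Rabs (u (k + j)%nat - u k) <= C * (1/2) ^ k) -> ex_finite_lim_seq u.
Proof.
  intros Hb. apply ex_lim_seq_cauchy_corr. intros eps.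
  destruct (geo_small (2 * C) eps (cond_pos eps)) as [N HN].
  exists N. intros n m Hn Hm.
  pose proof (Hb N (n - N)%nat) as H1. pose proof (Hb N (m - N)%nat) as H2.
  replace (N + (n - N))%nat with n in H1 by lia. replace (N + (m - N))%nat with m in H2 by lia.
  specialize (HN N (Nat.le_refl _)).
  pose proof (Rabs_triang (u n - u N) (u N - u m)).
  replace (u n - u N + (u N - u m)) with (u n - u m) in H by ring.
  rewrite <- Rabs_Ropp with (x := u N - u m) in H. replace (- (u N - u m)) with (u m - u N) in H by ring.
  lra.
Qed.

Lemma pic_conv G1 G2 Gm K a x0 q0 h : PicHyp G1 G2 Gm K -> 0 < h -> K * h <= 1/4 ->
  forall t, a <= t <= a + h ->
  is_lim_seq (fun k => fst (pic G1 G2 a x0 q0 k) t) (real (Lim_seq (fun k => fst (pic G1 G2 a x0 q0 k) t))) /\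
  is_lim_seq (fun k => snd (pic G1 G2 a x0 q0 k) t) (real (Lim_seq (fun k => snd (pic G1 G2 a x0 q0 k) t))) /\
  forall k, Rabs (Lim_seq (fun k => fst (pic G1 G2 a x0 q0 k) t) - fst (pic G1 G2 a x0 q0 k) t) +
            Rabs (Lim_seq (fun k => snd (pic G1 G2 a x0 q0 k) t) - snd (pic G1 G2 a x0 q0 k) t) <= 2 * (2 * Gm * h) * (1/2) ^ k.
Proof.
  intros H Hh HKh t Ht.
  pose proof (cauchy_bound G1 G2 Gm K a x0 q0 h H Hh HKh) as CB.
  assert (HGm : 0 <= Gm) by apply H.
  assert (Bd : forall k j, Rabs (fst (pic G1 G2 a x0 q0 (k + j)) t - fst (pic G1 G2 a x0 q0 k) t) +
      Rabs (snd (pic G1 G2 a x0 q0 (k + j)) t - snd (pic G1 G2 a x0 q0 k) t) <= 2 * (2 * Gm * h) * (1/2) ^ k).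
  { intros k j. specialize (CB j k t Ht). assert (0 <= 2 * (2 * Gm * h) * (1/2) ^ (k + j)).
    { apply Rmult_le_pos; [nra| apply pow_le; lra]. } lra. }
  assert (E1 : ex_finite_lim_seq (fun k => fst (pic G1 G2 a x0 q0 k) t)).
  { apply (seq_cauchy _ (2 * (2 * Gm * h))). intros k j. specialize (Bd k j). pose proof (Rabs_pos (snd (pic G1 G2 a x0 q0 (k + j)) t - snd (pic G1 G2 a x0 q0 k) t)). simpl. lra. }
  assert (E2 : ex_finite_lim_seq (fun k => snd (pic G1 G2 a x0 q0 k) t)).
  { apply (seq_cauchy _ (2 * (2 * Gm * h))). intros k j. specialize (Bd k j). pose proof (Rabs_pos (fst (pic G1 G2 a x0 q0 (k + j)) t - fst (pic G1 G2 a x0 q0 k) t)). simpl. lra. }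
  destruct E1 as [l1 L1]. destruct E2 as [l2 L2].
  rewrite (is_lim_seq_unique _ _ L1), (is_lim_seq_unique _ _ L2). simpl.
  split; [exact L1|]. split; [exact L2|].
  intros k. apply (tail_bound (fun k => fst (pic G1 G2 a x0 q0 k) t) (fun k => snd (pic G1 G2 a x0 q0 k) t)); auto.
Qed.

Definition clp (lo hi t : R) := Rmax lo (Rmin hi t).

Lemma clp_in lo hi t : lo <= hi -> lo <= clp lo hi t <= hi.
Proof. intros H. unfold clp, Rmax, Rmin. repeat destruct Rle_dec; lra. Qed.

Lemma clp_id lo hi t : lo <= t <= hi -> clp lo hi t = t.
Proof. intros H. unfold clp, Rmax, Rmin. repeat destruct Rle_dec; lra. Qed.

Lemma clp_lip lo hi t t' : lo <= hi -> Rabs (clp lo hi t - clp lo hi t') <= Rabs (t - t').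
Proof.
  intros H. unfold clp, Rmax, Rmin.
  repeat destruct Rle_dec; unfold Rabs; repeat destruct Rcase_abs; lra.
Qed.

Lemma der_const_plus (c : R) (f : R -> R) x l : is_derive f x l -> is_derive (fun y => c + f y) x l.
Proof.
  intros H. pose proof (is_derive_plus (K:=R_AbsRing) (V:=R_NormedModule) (fun _ => c) f x 0 l (is_derive_const (K:=R_AbsRing) (V:=R_NormedModule) c x) H) as D.
  replace l with (plus 0 l) by (unfold plus; simpl; ring). exact D.
Qed.

Lemma picard G1 G2 Gm K a x0 q0 h : PicHyp G1 G2 Gm K -> 0 < h -> K * h <= 1/4 ->
  exists X Q : R -> R,
  (forall t t', Rabs (X t - X t') <= Gm * Rabs (t - t') /\ Rabs (Q t - Q t') <= Gm * Rabs (t - t')) /\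
  (forall t, a < t < a + h -> is_derive X t (G1 t (X t) (Q t)) /\ is_derive Q t (G2 t (X t) (Q t))) /\
  (forall (Y Z : R -> R) c, c <= a + h ->
     (forall s, a <= s <= c -> continuous Y s /\ continuous Z s /\
        Y s = x0 + RInt (fun u => G1 u (Y u) (Z u)) a s /\ Z s = q0 + RInt (fun u => G2 u (Y u) (Z u)) a s) ->
     forall t, a <= t <= c -> X t = Y t /\ Q t = Z t).
Proof.
  intros H Hh HKh. pose proof H as (HGm&HK&Hb&Hl&Hc).
  pose proof (pic_reg _ _ _ _ a x0 q0 H) as Hreg.
  pose proof (pic_conv _ _ _ _ a x0 q0 h H Hh HKh) as Hconv.
  set (Xk := fun k => fst (pic G1 G2 a x0 q0 k)). set (Qk := fun k => snd (pic G1 G2 a x0 q0 k)).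
  set (LX := fun t => real (Lim_seq (fun k => Xk k t))). set (LQ := fun t => real (Lim_seq (fun k => Qk k t))).
  set (X := fun t => LX (clp a (a + h) t)). set (Q := fun t => LQ (clp a (a + h) t)).
  set (D0 := 2 * Gm * h).
  assert (HD0 : 0 <= D0) by (unfold D0; nra).
  assert (XL : forall t, a <= t <= a + h -> X t = LX t) by (intros t Ht; unfold X; now rewrite clp_id).
  assert (QL : forall t, a <= t <= a + h -> Q t = LQ t) by (intros t Ht; unfold Q; now rewrite clp_id).
  assert (Llip : forall t t', a <= t <= a + h -> a <= t' <= a + h ->
     Rabs (LX t - LX t') <= Gm * Rabs (t - t') /\ Rabs (LQ t - LQ t') <= Gm * Rabs (t - t')).
  { intros t t' Ht Ht'. destruct (Hconv t Ht) as (C1&C2&_). destruct (Hconv t' Ht') as (C3&C4&_).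
    split.
    - pose proof (is_lim_seq_abs _ _ (is_lim_seq_minus' _ _ _ _ C1 C3)) as L.
      pose proof (is_lim_seq_le _ (fun _ => Gm * Rabs (t - t')) _ _ (fun k => proj1 (pic_lip _ _ _ _ a x0 q0 H k t t')) L (is_lim_seq_const _)) as L2.
      exact L2.
    - pose proof (is_lim_seq_abs _ _ (is_lim_seq_minus' _ _ _ _ C2 C4)) as L.
      pose proof (is_lim_seq_le _ (fun _ => Gm * Rabs (t - t')) _ _ (fun k => proj2 (pic_lip _ _ _ _ a x0 q0 H k t t')) L (is_lim_seq_const _)) as L2.
      exact L2. }
  assert (Lip : forall t t', Rabs (X t - X t') <= Gm * Rabs (t - t') /\ Rabs (Q t - Q t') <= Gm * Rabs (t - t')).
  { intros t t'. pose proof (clp_in a (a + h) t ltac:(lra)). pose proof (clp_in a (a + h) t' ltac:(lra)).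
    pose proof (clp_lip a (a + h) t t' ltac:(lra)).
    destruct (Llip _ _ H0 H1) as [A1 A2]. unfold X, Q.
    split; (eapply Rle_trans; [eassumption| apply Rmult_le_compat_l; auto]). }
  assert (Cont : forall t, continuous X t /\ continuous Q t).
  { intros t. split; apply (lip_cont' _ t Gm HGm); intros y; apply Lip. }
  exists X, Q. split; [exact Lip|].
  assert (XkL : forall k s, a <= s <= a + h -> Rabs (X s - Xk k s) + Rabs (Q s - Qk k s) <= 2 * D0 * (1/2) ^ k).
  { intros k s Hs. rewrite (XL s Hs), (QL s Hs). destruct (Hconv s Hs) as (_&_&B). exact (B k). }
  assert (Ccont : forall s, continuous (fun u => G1 u (X u) (Q u)) s /\ continuous (fun u => G2 u (X u) (Q u)) s)
    by (intros s; destruct (Cont s) as [C1 C2]; exact (Hc X Q s C1 C2)).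
  clearbody X Q.
  assert (IntEq : forall t, a <= t <= a + h -> X t = x0 + RInt (fun u => G1 u (X u) (Q u)) a t /\ Q t = q0 + RInt (fun u => G2 u (X u) (Q u)) a t).
  { intros t Ht.
    assert (Hk : forall k, Rabs (X t - (x0 + RInt (fun u => G1 u (X u) (Q u)) a t)) + Rabs (Q t - (q0 + RInt (fun u => G2 u (X u) (Q u)) a t)) <= 4 * D0 * (1/2) ^ k).
    { intros k.
      destruct (contr G1 G2 Gm K (Xk k) (Qk k) X Q a (a + h) (2 * D0 * (1/2) ^ k) H) with (t := t) as [E1 E2]; auto.
      { intros s Hs. repeat split; try apply Hreg; apply Cont. }
      { intros s Hs. specialize (XkL k s Hs). rewrite <- (Rabs_Ropp (Xk k s - X s)), <- (Rabs_Ropp (Qk k s - Q s)).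
        replace (- (Xk k s - X s)) with (X s - Xk k s) by ring. replace (- (Qk k s - Q s)) with (Q s - Qk k s) by ring. exact XkL. }
      specialize (XkL (S k) t Ht).
      change (Xk (S k) t) with (x0 + RInt (fun s => G1 s (Xk k s) (Qk k s)) a t) in XkL.
      change (Qk (S k) t) with (q0 + RInt (fun s => G2 s (Xk k s) (Qk k s)) a t) in XkL.
      set (I1 := RInt (fun s => G1 s (Xk k s) (Qk k s)) a t) in *. set (I2 := RInt (fun s => G2 s (Xk k s) (Qk k s)) a t) in *.
      set (J1 := RInt (fun u => G1 u (X u) (Q u)) a t) in *. set (J2 := RInt (fun u => G2 u (X u) (Q u)) a t) in *.
      pose proof (Rabs_triang (X t - (x0 + I1)) (I1 - J1)). pose proof (Rabs_triang (Q t - (q0 + I2)) (I2 - J2)).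
      replace (X t - (x0 + I1) + (I1 - J1)) with (X t - (x0 + J1)) in H0 by ring.
      replace (Q t - (q0 + I2) + (I2 - J2)) with (Q t - (q0 + J2)) in H1 by ring.
      assert (0 <= (1/2) ^ k) by (apply pow_le; lra).
      assert ((t - a) * (K * (2 * D0 * (1 / 2) ^ k)) <= D0 * (1/2) ^ k / 2).
      { replace ((t - a) * (K * (2 * D0 * (1 / 2) ^ k))) with (((t - a) * K) * (2 * D0 * (1 / 2) ^ k)) by ring.
        assert (Hta : (t - a) * K <= 1/4).
        { apply Rle_trans with (h * K); [apply Rmult_le_compat_r; lra| lra]. }
        assert (Hp : 0 <= 2 * D0 * (1/2) ^ k) by (apply Rmult_le_pos; [lra| assumption]).
        apply Rle_trans with (1/4 * (2 * D0 * (1 / 2) ^ k)); [apply Rmult_le_compat_r; assumption| lra]. }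
      simpl (_ ^ S k) in XkL. assert (0 <= D0 * (1/2) ^ k) by (apply Rmult_le_pos; lra). lra. }
    assert (Z : Rabs (X t - (x0 + RInt (fun u => G1 u (X u) (Q u)) a t)) + Rabs (Q t - (q0 + RInt (fun u => G2 u (X u) (Q u)) a t)) = 0).
    { apply small_zero'. intros eps Heps. destruct (geo_small (4 * D0) eps Heps) as [N HN].
      specialize (HN N (Nat.le_refl _)). specialize (Hk N).
      rewrite Rabs_right by (apply Rle_ge, Rplus_le_le_0_compat; apply Rabs_pos). lra. }
    pose proof (Rabs_pos (X t - (x0 + RInt (fun u => G1 u (X u) (Q u)) a t))).
    pose proof (Rabs_pos (Q t - (q0 + RInt (fun u => G2 u (X u) (Q u)) a t))).
    split; apply Rminus_diag_uniq; apply Rabs_eq_0; lra. }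
  split.
  - intros t Ht.
    assert (Loc : locally t (fun y => a < y < a + h)).
    { exists (mkposreal (Rmin (t - a) (a + h - t)) ltac:(apply Rmin_pos; lra)). intros y Hy.
      unfold ball in Hy; simpl in Hy; unfold AbsRing_ball, abs, minus, plus, opp in Hy; simpl in Hy.
      apply Rabs_def2 in Hy. pose proof (Rmin_l (t - a) (a + h - t)). pose proof (Rmin_r (t - a) (a + h - t)). lra. }
    split.
    + assert (D : is_derive (fun y => x0 + RInt (fun u => G1 u (X u) (Q u)) a y) t (G1 t (X t) (Q t))).
      { apply (der_const_plus x0). apply (is_derive_RInt (fun u => G1 u (X u) (Q u)) _ a t).
        - apply filter_forall. intros y. apply (RInt_correct (V:=R_CompleteNormedModule)).
          apply (ex_RInt_continuous (V:=R_CompleteNormedModule)). intros; apply Ccont.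
        - apply Ccont. }
      apply (is_derive_ext_loc _ X _ _ ) in D; [exact D|].
      eapply filter_imp; [|exact Loc]. intros y Hy. symmetry. apply IntEq. lra.
    + assert (D : is_derive (fun y => q0 + RInt (fun u => G2 u (X u) (Q u)) a y) t (G2 t (X t) (Q t))).
      { apply (der_const_plus q0). apply (is_derive_RInt (fun u => G2 u (X u) (Q u)) _ a t).
        - apply filter_forall. intros y. apply (RInt_correct (V:=R_CompleteNormedModule)).
          apply (ex_RInt_continuous (V:=R_CompleteNormedModule)). intros; apply Ccont.
        - apply Ccont. }
      apply (is_derive_ext_loc _ Q _ _ ) in D; [exact D|].
      eapply filter_imp; [|exact Loc]. intros y Hy. symmetry. apply IntEq. lra.
  - intros Y Z c Hcc HYZ.
    assert (Ex : forall (G : R -> R -> R -> R) s, a <= s <= c ->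
      (forall (X Q : R -> R) t, continuous X t -> continuous Q t -> continuous (fun s => G s (X s) (Q s)) t) ->
      ex_RInt (fun u => G u (Y u) (Z u)) a s).
    { intros G s Hs HG. apply (ex_RInt_continuous (V:=R_CompleteNormedModule)).
      intros z Hz. rewrite Rmin_left in Hz by lra. rewrite Rmax_right in Hz by lra.
      destruct (HYZ z ltac:(lra)) as (C1&C2&_). apply HG; auto. }
    assert (HG1 : forall (X Q : R -> R) t, continuous X t -> continuous Q t -> continuous (fun s => G1 s (X s) (Q s)) t)
      by (intros X0 Q0 t0 C1 C2; exact (proj1 (Hc X0 Q0 t0 C1 C2))).
    assert (HG2 : forall (X Q : R -> R) t, continuous X t -> continuous Q t -> continuous (fun s => G2 s (X s) (Q s)) t)
      by (intros X0 Q0 t0 C1 C2; exact (proj2 (Hc X0 Q0 t0 C1 C2))).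
    assert (Bk : forall k s, a <= s <= c -> Rabs (Xk k s - Y s) + Rabs (Qk k s - Z s) <= D0 * (1/2) ^ k).
    { induction k as [|k IH]; intros s Hs.
      - destruct (HYZ s Hs) as (_&_&E1&E2). rewrite E1, E2. change (Xk 0%nat s) with x0. change (Qk 0%nat s) with q0. simpl (_ ^ 0).
        replace (x0 - (x0 + RInt (fun u => G1 u (Y u) (Z u)) a s)) with (- RInt (fun u => G1 u (Y u) (Z u)) a s) by ring.
        replace (q0 - (q0 + RInt (fun u => G2 u (Y u) (Z u)) a s)) with (- RInt (fun u => G2 u (Y u) (Z u)) a s) by ring.
        rewrite !Rabs_Ropp.
        pose proof (abs_RInt_le_const (fun u => G1 u (Y u) (Z u)) a s Gm ltac:(lra) (Ex G1 s Hs HG1) (fun u _ => proj1 (Hb u (Y u) (Z u)))).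
        pose proof (abs_RInt_le_const (fun u => G2 u (Y u) (Z u)) a s Gm ltac:(lra) (Ex G2 s Hs HG2) (fun u _ => proj2 (Hb u (Y u) (Z u)))).
        unfold D0. assert ((s - a) * Gm <= h * Gm) by (apply Rmult_le_compat_r; lra). lra.
      - destruct (contr G1 G2 Gm K (Xk k) (Qk k) Y Z a c (D0 * (1/2) ^ k) H) with (t := s) as [E1 E2]; auto.
        { intros u Hu. destruct (HYZ u Hu) as (C1&C2&_). repeat split; auto; apply Hreg. }
        destruct (HYZ s Hs) as (_&_&F1&F2). rewrite F1, F2.
        change (Xk (S k) s) with (x0 + RInt (fun u => G1 u (Xk k u) (Qk k u)) a s).
        change (Qk (S k) s) with (q0 + RInt (fun u => G2 u (Xk k u) (Qk k u)) a s).
        rewrite !pm2.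
        assert (0 <= D0 * (1/2) ^ k) by (apply Rmult_le_pos; [lra| apply pow_le; lra]).
        assert ((s - a) * (K * (D0 * (1 / 2) ^ k)) <= 1/4 * (D0 * (1/2) ^ k)).
        { replace ((s - a) * (K * (D0 * (1 / 2) ^ k))) with (((s - a) * K) * (D0 * (1 / 2) ^ k)) by ring.
          apply Rmult_le_compat_r; auto. apply Rle_trans with (h * K); [apply Rmult_le_compat_r; lra| lra]. }
        simpl (_ ^ S k). lra. }
    intros t Ht.
    assert (Zs : Rabs (X t - Y t) + Rabs (Q t - Z t) = 0).
    { apply small_zero'. intros eps Heps. destruct (geo_small (3 * D0) eps Heps) as [N HN].
      specialize (HN N (Nat.le_refl _)). specialize (Bk N t Ht). specialize (XkL N t ltac:(lra)).
      pose proof (Rabs_triang (X t - Xk N t) (Xk N t - Y t)). pose proof (Rabs_triang (Q t - Qk N t) (Qk N t - Z t)).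
      replace (X t - Xk N t + (Xk N t - Y t)) with (X t - Y t) in H0 by ring.
      replace (Q t - Qk N t + (Qk N t - Z t)) with (Q t - Z t) in H1 by ring.
      rewrite Rabs_right by (apply Rle_ge, Rplus_le_le_0_compat; apply Rabs_pos). lra. }
    pose proof (Rabs_pos (X t - Y t)). pose proof (Rabs_pos (Q t - Z t)).
    split; apply Rminus_diag_uniq; apply Rabs_eq_0; lra.
Qed.
Lemma cont_mul (f g : R -> R) x : continuous f x -> continuous g x -> continuous (fun y => f y * g y) x.
Proof. intros H1 H2. exact (continuous_mult f g x H1 H2). Qed.

Lemma cont_opp (f : R -> R) x : continuous f x -> continuous (fun y => - f y) x.
Proof. intros H1. exact (continuous_opp f x H1). Qed.

Lemma cont_inv (f : R -> R) x : continuous f x -> f x <> 0 -> continuous (fun y => / f y) x.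
Proof. intros H1 H2. exact (continuous_Rinv_comp f x H1 H2). Qed.

Lemma cont_comp (f g : R -> R) x : continuous f x -> continuous g (f x) -> continuous (fun y => g (f y)) x.
Proof. intros H1 H2. exact (continuous_comp f g x H1 H2). Qed.

Lemma cont_const (c x : R) : continuous (fun _ : R => c) x.
Proof. exact (continuous_const (U:=R_UniformSpace) c x). Qed.

Lemma cont_clp lo hi x : lo <= hi -> continuous (clp lo hi) x.
Proof. intros H. apply (lip_cont' _ x 1); [lra|]. intros y. rewrite Rmult_1_l. now apply clp_lip. Qed.

Definition rc (rho : R -> R) (L P q : R) := rho (clp (L/2) (2*P) q).
Definition GG1 (rho : R -> R) (L P a1 bb : R) (s x q : R) := 4 * PI * (clp a1 bb s) ^ 2 * rc rho L P q.
Definition GG2 (rho : R -> R) (L P Mb a1 bb : R) (s x q : R) := - (clp 0 (2*Mb) x * rc rho L P q) / (clp a1 bb s) ^ 2.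
Definition GGm (rho : R -> R) (L P Mb a1 bb : R) := 4 * PI * bb ^ 2 * rho (2*P) + 2 * Mb * rho (2*P) / a1 ^ 2.
Definition GK (rho eta rhoE : R -> R) (B L P Mb a1 bb : R) :=
  4 * PI * bb ^ 2 * KR rho eta rhoE B (L/2) (2*P) + (rho (2*P) + 2 * Mb * KR rho eta rhoE B (L/2) (2*P)) / a1 ^ 2.

Lemma rc_bounds rho eta rhoE B L P q : EOSd rho eta rhoE B -> 0 < L -> L <= P -> 0 < rc rho L P q <= rho (2*P).
Proof.
  intros H HL HLP. unfold rc. pose proof (clp_in (L/2) (2*P) q ltac:(lra)).
  split. apply (rho_pos _ _ _ _ _ H); lra. apply (rho_mono _ _ _ _ _ _ H); lra.
Qed.

Lemma rc_lip rho eta rhoE B L P q q' : EOSd rho eta rhoE B -> 0 < L -> L <= P ->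
  Rabs (rc rho L P q - rc rho L P q') <= KR rho eta rhoE B (L/2) (2*P) * Rabs (q - q').
Proof.
  intros H HL HLP. unfold rc. pose proof (clp_in (L/2) (2*P) q ltac:(lra)). pose proof (clp_in (L/2) (2*P) q' ltac:(lra)).
  eapply Rle_trans; [apply (rho_lip_abs rho eta rhoE B (L/2) (2*P) _ _ H); lra|].
  apply Rmult_le_compat_l. apply KR_nonneg; auto; lra. apply clp_lip; lra.
Qed.

Ltac pos := repeat (first [assumption | lra | (apply pow_le; lra) | apply Rmult_le_pos]).

Lemma GG_hyp rho eta rhoE B L P Mb a1 bb : EOSd rho eta rhoE B -> 0 < L -> L <= P -> 0 < Mb -> 0 < a1 <= bb ->
  PicHyp (GG1 rho L P a1 bb) (GG2 rho L P Mb a1 bb) (GGm rho L P Mb a1 bb) (GK rho eta rhoE B L P Mb a1 bb).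
Proof.
  intros H HL HLP HMb Ha.
  set (Kr := KR rho eta rhoE B (L/2) (2*P)).
  assert (HKr : 0 <= Kr) by (apply KR_nonneg; auto; lra).
  set (rm := rho (2*P)).
  assert (Hrm : 0 < rm) by (apply (rho_pos _ _ _ _ _ H); lra).
  pose proof PI_RGT_0 as HPI.
  assert (Ha2 : 0 < a1 ^ 2) by (apply pow_lt; lra).
  assert (Hct : forall s, a1 ^ 2 <= clp a1 bb s ^ 2 <= bb ^ 2).
  { intros s. pose proof (clp_in a1 bb s ltac:(lra)). split; apply pow_incr; lra. }
  assert (Hcx : forall x, 0 <= clp 0 (2*Mb) x <= 2 * Mb) by (intros x; apply clp_in; lra).
  split; [|split; [|split; [|split]]].
  - unfold GGm. fold rm. apply Rplus_le_le_0_compat.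
    + pos.
    + unfold Rdiv. apply Rmult_le_pos; [pos| left; apply Rinv_0_lt_compat; lra].
  - unfold GK. fold Kr rm. apply Rplus_le_le_0_compat.
    + pos.
    + unfold Rdiv. apply Rmult_le_pos; [|left; apply Rinv_0_lt_compat; lra].
      apply Rplus_le_le_0_compat; [lra|]. pos.
  - intros s x q. pose proof (rc_bounds _ _ _ _ L P q H HL HLP) as [R1 R2]. fold rm in R2.
    destruct (Hct s) as [C1 C2]. destruct (Hcx x) as [X1 X2].
    assert (A1 : 0 <= 4 * PI * bb ^ 2 * rm) by (pos).
    assert (A2 : 0 <= 2 * Mb * rm / a1 ^ 2) by (unfold Rdiv; apply Rmult_le_pos; [pos| left; apply Rinv_0_lt_compat; lra]).
    unfold GGm, GG1, GG2. fold rm. split.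
    + rewrite Rabs_right.
      * assert (4 * PI * clp a1 bb s ^ 2 * rc rho L P q <= 4 * PI * bb ^ 2 * rm).
        { apply Rmult_le_compat; try lra. apply Rmult_le_pos; lra. apply Rmult_le_compat_l; lra. }
        lra.
      * apply Rle_ge. pos.
    + unfold Rdiv. rewrite Rabs_mult, Rabs_Ropp, Rabs_mult, (Rabs_right (clp 0 (2*Mb) x)), (Rabs_right (rc rho L P q)), Rabs_Rinv, Rabs_right by (try apply Rgt_not_eq; lra).
      assert (clp 0 (2*Mb) x * rc rho L P q * / clp a1 bb s ^ 2 <= 2 * Mb * rm * / a1 ^ 2).
      { apply Rmult_le_compat; try (apply Rmult_le_pos; lra). left; apply Rinv_0_lt_compat; lra.
        apply Rmult_le_compat; lra. apply Rinv_le_contravar; lra. }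
      unfold Rdiv in A2. lra.
  - intros s x q x' q'.
    pose proof (rc_lip _ _ _ _ L P q q' H HL HLP) as RL. fold Kr in RL.
    pose proof (rc_bounds _ _ _ _ L P q H HL HLP) as [R1 R2]. fold rm in R2.
    destruct (Hct s) as [C1 C2]. destruct (Hcx x') as [X1 X2].
    pose proof (clp_lip 0 (2*Mb) x x' ltac:(lra)) as XL.
    pose proof (Rabs_pos (x - x')) as P1. pose proof (Rabs_pos (q - q')) as P2.
    unfold GK, GG1, GG2. fold Kr rm. split.
    + replace (4 * PI * clp a1 bb s ^ 2 * rc rho L P q - 4 * PI * clp a1 bb s ^ 2 * rc rho L P q')
        with ((4 * PI * clp a1 bb s ^ 2) * (rc rho L P q - rc rho L P q')) by ring.
      rewrite Rabs_mult, (Rabs_right (4 * PI * clp a1 bb s ^ 2)) by (apply Rle_ge, Rmult_le_pos; lra).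
      assert (B1 : 4 * PI * clp a1 bb s ^ 2 * Rabs (rc rho L P q - rc rho L P q') <= 4 * PI * bb ^ 2 * (Kr * Rabs (q - q'))).
      { apply Rmult_le_compat; try lra. apply Rmult_le_pos; lra. apply Rabs_pos. apply Rmult_le_compat_l; lra. }
      assert (B2 : 0 <= (rm + 2 * Mb * Kr) / a1 ^ 2) by (unfold Rdiv; apply Rmult_le_pos; [nra| left; apply Rinv_0_lt_compat; lra]).
      assert (B3 : 0 <= 4 * PI * bb ^ 2 * Kr) by (pos).
      assert (B4 : 0 <= (rm + 2 * Mb * Kr) / a1 ^ 2 * (Rabs (x - x') + Rabs (q - q'))) by (apply Rmult_le_pos; lra).
      assert (B5 : 4 * PI * bb ^ 2 * Kr * Rabs (q - q') <= 4 * PI * bb ^ 2 * Kr * (Rabs (x - x') + Rabs (q - q')))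
        by (apply Rmult_le_compat_l; lra).
      nra.
    + set (cx := clp 0 (2*Mb) x). set (cx' := clp 0 (2*Mb) x'). fold cx' in X1, X2. fold cx cx' in XL.
      set (r := rc rho L P q). set (r' := rc rho L P q'). fold r r' in RL. fold r in R1, R2.
      set (c2 := clp a1 bb s ^ 2). fold c2 in C1, C2.
      replace (- (cx * r) / c2 - - (cx' * r') / c2) with (- ((cx - cx') * r + cx' * (r - r')) / c2) by (field; lra).
      unfold Rdiv. rewrite Rabs_mult, Rabs_Ropp, Rabs_Rinv, (Rabs_right c2) by lra.
      pose proof (Rabs_triang ((cx - cx') * r) (cx' * (r - r'))) as T.
      rewrite !Rabs_mult, (Rabs_right r), (Rabs_right cx') in T by lra.
      assert (T1 : Rabs (cx - cx') * r <= Rabs (x - x') * rm) by (apply Rmult_le_compat; try lra; apply Rabs_pos).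
      assert (T2 : cx' * Rabs (r - r') <= 2 * Mb * (Kr * Rabs (q - q'))) by (apply Rmult_le_compat; try lra; apply Rabs_pos).
      assert (T3 : Rabs ((cx - cx') * r + cx' * (r - r')) <= (rm + 2 * Mb * Kr) * (Rabs (x - x') + Rabs (q - q'))).
      { assert (0 <= rm * Rabs (q - q')) by nra. assert (0 <= 2 * Mb * Kr * Rabs (x - x')) by (apply Rmult_le_pos; nra). nra. }
      assert (T4 : Rabs ((cx - cx') * r + cx' * (r - r')) * / c2 <= (rm + 2 * Mb * Kr) * (Rabs (x - x') + Rabs (q - q')) * / a1 ^ 2).
      { apply Rmult_le_compat; try lra. apply Rabs_pos. left; apply Rinv_0_lt_compat; lra. apply Rinv_le_contravar; lra. }
      assert (0 <= 4 * PI * bb ^ 2 * Kr * (Rabs (x - x') + Rabs (q - q'))).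
      { pos. }
      replace ((4 * PI * bb ^ 2 * Kr + (rm + 2 * Mb * Kr) / a1 ^ 2) * (Rabs (x - x') + Rabs (q - q')))
        with (4 * PI * bb ^ 2 * Kr * (Rabs (x - x') + Rabs (q - q')) + (rm + 2 * Mb * Kr) * (Rabs (x - x') + Rabs (q - q')) * / a1 ^ 2)
        by (field; lra).
      lra.
  - intros X Q t HX HQ.
    assert (HR : continuous (fun s => rc rho L P (Q s)) t).
    { unfold rc. apply (cont_comp (fun s => clp (L/2) (2*P) (Q s)) rho).
      apply (cont_comp Q (clp (L/2) (2*P))); auto. apply cont_clp; lra.
      pose proof (clp_in (L/2) (2*P) (Q t) ltac:(lra)). apply (rho_cont _ _ _ _ _ H). lra. }
    assert (HC : continuous (fun s => clp a1 bb s ^ 2) t).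
    { simpl. apply cont_mul. apply cont_clp; lra. apply cont_mul. apply cont_clp; lra. apply cont_const. }
    split.
    + unfold GG1. apply cont_mul; auto. apply cont_mul; auto. apply cont_const.
    + unfold GG2. unfold Rdiv. apply cont_mul.
      * apply cont_opp. apply cont_mul; auto. apply (cont_comp X (clp 0 (2*Mb))); auto. apply cont_clp; lra.
      * apply cont_inv; auto. pose proof (Hct t). lra.
Qed.

Lemma der_continuous (f : R -> R) x l : is_derive f x l -> continuous f x.
Proof. intros H. apply (ex_derive_continuous (V:=R_NormedModule)). now exists l. Qed.

Lemma loc_interval (t lo hi : R) : lo < t < hi -> locally t (fun y => lo < y < hi).
Proof.
  intros Ht. exists (mkposreal (Rmin (t - lo) (hi - t)) ltac:(apply Rmin_pos; lra)). intros y Hy.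
  unfold ball in Hy; simpl in Hy; unfold AbsRing_ball, abs, minus, plus, opp in Hy; simpl in Hy.
  apply Rabs_def2 in Hy. pose proof (Rmin_l (t - lo) (hi - t)). pose proof (Rmin_r (t - lo) (hi - t)). lra.
Qed.

Lemma abs_le x c : Rabs x <= c -> - c <= x <= c.
Proof. intros H. unfold Rabs in H. destruct Rcase_abs; lra. Qed.

Lemma extend rho eta rhoE B m p r0 Rr :
  EOSd rho eta rhoE B -> fluid_solution rho m p r0 (Finite Rr) ->
  (exists L, 0 < L /\ forall r, r0 < r < Rr -> L <= p r) ->
  (exists Mb, forall r, r0 < r < Rr -> m r <= Mb) ->
  exists m2 p2 R2, Rr < R2 /\ fluid_solution rho m2 p2 r0 (Finite R2) /\
    forall r, r0 < r -> r < Rr -> m2 r = m r /\ p2 r = p r.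
Proof.
  intros H [Hr0 [HRr Hs0]] [L [HL HLp]] [Mb HMb].
  simpl in HRr.
  assert (Hs : forall r, r0 < r < Rr -> 0 < p r /\ 0 < m r /\ is_derive m r (4 * PI * r ^ 2 * rho (p r)) /\
    is_derive p r (- (m r * rho (p r)) / r ^ 2)) by (intros r Hr; apply Hs0; simpl; lra).
  clear Hs0.
  pose proof PI_RGT_0 as HPI.
  set (a1 := (r0 + Rr) / 2).
  assert (Ha1 : r0 < a1 < Rr) by (unfold a1; lra).
  assert (pdec : forall x y, r0 < x -> x <= y -> y < Rr -> p y <= p x).
  { intros x y Hx Hxy Hy. apply (mono_ge_cl p (fun r => - (m r * rho (p r)) / r ^ 2) x y Hxy).
    - intros z Hz. apply Hs; lra.
    - intros z Hz. destruct (Hs z ltac:(lra)) as (P1&P2&_). pose proof (rho_pos _ _ _ _ _ H P1).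
      unfold Rdiv. assert (0 < / z ^ 2) by (apply Rinv_0_lt_compat, pow_lt; lra).
      assert (0 <= m z * rho (p z) * / z ^ 2) by (apply Rmult_le_pos; [apply Rmult_le_pos; lra| lra]). lra. }
  assert (minc : forall x y, r0 < x -> x <= y -> y < Rr -> m x <= m y).
  { intros x y Hx Hxy Hy. apply (mono_le_cl m (fun r => 4 * PI * r ^ 2 * rho (p r)) x y Hxy).
    - intros z Hz. apply Hs; lra.
    - intros z Hz. destruct (Hs z ltac:(lra)) as (P1&P2&_). pose proof (rho_pos _ _ _ _ _ H P1).
      assert (0 <= z ^ 2) by (apply pow_le; lra). apply Rmult_le_pos; [|lra]. apply Rmult_le_pos; lra. }
  set (P := p a1).
  assert (HLP : L <= P) by (apply HLp; lra).
  assert (HMb0 : 0 < Mb) by (destruct (Hs a1 Ha1) as (_&M1&_); pose proof (HMb a1 Ha1); lra).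
  set (bb := Rr + 1).
  assert (Ha1b : 0 < a1 <= bb) by (unfold bb; lra).
  set (G1 := GG1 rho L P a1 bb). set (G2 := GG2 rho L P Mb a1 bb).
  set (Gm := GGm rho L P Mb a1 bb). set (K := GK rho eta rhoE B L P Mb a1 bb).
  pose proof (GG_hyp rho eta rhoE B L P Mb a1 bb H HL HLP HMb0 Ha1b) as HH. fold G1 G2 Gm K in HH.
  pose proof HH as (HGm&HK&_&_&HGc).
  set (h := Rmin 1 (/ (4 * (K + 1)))).
  assert (Hh : 0 < h) by (unfold h; apply Rmin_pos; [lra| apply Rinv_0_lt_compat; lra]).
  assert (Hh1 : h <= 1) by apply Rmin_l.
  assert (HKh : K * h <= 1/4).
  { assert (h <= / (4 * (K + 1))) by apply Rmin_r.
    apply Rle_trans with (K * / (4 * (K + 1))); [apply Rmult_le_compat_l; lra|].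
    apply Rmult_le_reg_r with (4 * (K + 1)); [lra|]. rewrite Rmult_assoc, Rinv_l by lra. lra. }
  set (a := Rmax a1 (Rr - h/2)).
  assert (Ha : a1 <= a < Rr /\ Rr < a + h /\ a + h < bb).
  { unfold a, bb, Rmax. destruct Rle_dec; lra. }
  destruct (picard G1 G2 Gm K a (m a) (p a) h HH Hh HKh) as (X & Q & Lip & Der & Uni).
  (* clamps are identities on the true solution *)
  assert (G1eq : forall t x q, a1 <= t <= bb -> L/2 <= q <= 2*P -> G1 t x q = 4 * PI * t ^ 2 * rho q).
  { intros t x q Ht Hq. unfold G1, GG1, rc. rewrite !clp_id by lra. reflexivity. }
  assert (G2eq : forall t x q, a1 <= t <= bb -> L/2 <= q <= 2*P -> 0 <= x <= 2*Mb -> G2 t x q = - (x * rho q) / t ^ 2).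
  { intros t x q Ht Hq Hx. unfold G2, GG2, rc. rewrite !clp_id by lra. reflexivity. }
  assert (Hbox : forall s, a1 <= s < Rr -> L <= p s <= P /\ 0 < m s <= Mb).
  { intros s Hs'. split; [split; [apply HLp; lra| apply pdec; lra]|]. split; [apply Hs; lra| apply HMb; lra]. }
  assert (Agree : forall t, a <= t < Rr -> X t = m t /\ Q t = p t).
  { intros t Ht. apply (Uni m p t); [lra| |lra].
    intros s Hs'.
    assert (HmpC : forall x, a <= x <= s -> continuous m x /\ continuous p x).
    { intros x Hx. destruct (Hs x ltac:(lra)) as (_&_&D1&D2). split; eapply der_continuous; eauto. }
    assert (FTC : forall (f : R -> R) (G : R -> R -> R -> R),
       (forall (X Q : R -> R) t, continuous X t -> continuous Q t -> continuous (fun u => G u (X u) (Q u)) t) ->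
       (forall x, a <= x <= s -> is_derive f x (G x (m x) (p x))) ->
       f s = f a + RInt (fun u => G u (m u) (p u)) a s).
    { intros f G HG Hd.
      pose proof (is_RInt_derive (V:=R_CompleteNormedModule) f (fun u => G u (m u) (p u)) a s) as I.
      rewrite Rmin_left, Rmax_right in I by lra.
      specialize (I (fun x Hx => Hd x Hx) (fun x Hx => HG m p x (proj1 (HmpC x Hx)) (proj2 (HmpC x Hx)))).
      rewrite (is_RInt_unique _ _ _ _ I). unfold minus, plus, opp; simpl. ring. }
    destruct (HmpC s ltac:(lra)) as [C1 C2].
    split; [exact C1|]. split; [exact C2|]. split.
    - apply FTC. intros X0 Q0 t0 HX HQ. exact (proj1 (HGc X0 Q0 t0 HX HQ)).
      intros x Hx. destruct (Hs x ltac:(lra)) as (_&_&D1&D2). destruct (Hbox x ltac:(lra)) as [B1 B2].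
      rewrite G1eq by lra. exact D1.
    - apply FTC. intros X0 Q0 t0 HX HQ. exact (proj2 (HGc X0 Q0 t0 HX HQ)).
      intros x Hx. destruct (Hs x ltac:(lra)) as (_&_&D1&D2). destruct (Hbox x ltac:(lra)) as [B1 B2].
      rewrite G2eq by lra. exact D2. }
  set (Gm' := Gm + 1).
  assert (HGm' : 0 < Gm') by (unfold Gm'; lra).
  assert (Hma : 0 < m a) by (apply Hs; lra).
  set (eps := Rmin (Rmin (a + h - Rr) (L / (4 * Gm'))) (Rmin (P / (4 * Gm')) (Rmin (m a / (4 * Gm')) (Mb / (4 * Gm'))))).
  assert (Heps : 0 < eps).
  { unfold eps. repeat apply Rmin_pos; try lra; apply Rdiv_lt_0_compat; lra. }
  assert (He1 : eps <= a + h - Rr) by (unfold eps; eapply Rle_trans; [apply Rmin_l| apply Rmin_l]).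
  assert (He2 : 2 * Gm' * eps <= L / 2).
  { assert (eps <= L / (4 * Gm')) by (unfold eps; eapply Rle_trans; [apply Rmin_l| apply Rmin_r]).
    apply Rmult_le_compat_l with (r := 2 * Gm') in H0; [|lra]. replace (2 * Gm' * (L / (4 * Gm'))) with (L / 2) in H0 by (field; lra). lra. }
  assert (He3 : 2 * Gm' * eps <= P / 2).
  { assert (eps <= P / (4 * Gm')) by (unfold eps; eapply Rle_trans; [apply Rmin_r| apply Rmin_l]).
    apply Rmult_le_compat_l with (r := 2 * Gm') in H0; [|lra]. replace (2 * Gm' * (P / (4 * Gm'))) with (P / 2) in H0 by (field; lra). lra. }
  assert (He4 : 2 * Gm' * eps <= m a / 2).
  { assert (eps <= m a / (4 * Gm')) by (unfold eps; eapply Rle_trans; [apply Rmin_r| eapply Rle_trans; [apply Rmin_r| apply Rmin_l]]).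
    apply Rmult_le_compat_l with (r := 2 * Gm') in H0; [|lra]. replace (2 * Gm' * (m a / (4 * Gm'))) with (m a / 2) in H0 by (field; lra). lra. }
  assert (He5 : 2 * Gm' * eps <= Mb / 2).
  { assert (eps <= Mb / (4 * Gm')) by (unfold eps; eapply Rle_trans; [apply Rmin_r| eapply Rle_trans; [apply Rmin_r| apply Rmin_r]]).
    apply Rmult_le_compat_l with (r := 2 * Gm') in H0; [|lra]. replace (2 * Gm' * (Mb / (4 * Gm'))) with (Mb / 2) in H0 by (field; lra). lra. }
  set (R2 := Rr + eps).
  assert (Hout : forall t, Rr <= t < R2 -> L/2 < Q t < 2 * P /\ 0 < X t < 2 * Mb).
  { intros t Ht. set (s := Rmax a (Rr - eps)).
    assert (Hs1 : a <= s < Rr /\ t - s < 2 * eps /\ s <= t) by (unfold s, R2 in *; unfold Rmax; destruct Rle_dec; lra).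
    destruct (Agree s ltac:(lra)) as [A1 A2].
    destruct (Hbox s ltac:(lra)) as [[B1 B2] [B3 B4]].
    assert (Hms : m a <= m s) by (apply minc; lra).
    destruct (Lip t s) as [L1 L2]. rewrite (Rabs_right (t - s)) in L1, L2 by lra.
    assert (Gm * (t - s) < 2 * Gm' * eps).
    { apply Rle_lt_trans with (Gm' * (t - s)). apply Rmult_le_compat_r; unfold Gm'; lra.
      apply Rlt_le_trans with (Gm' * (2 * eps)). apply Rmult_lt_compat_l; lra. lra. }
    apply abs_le in L1. apply abs_le in L2. lra. }
  set (m2 := fun t => if Rlt_dec t Rr then m t else X t).
  set (p2 := fun t => if Rlt_dec t Rr then p t else Q t).
  assert (EqX : forall y, a < y < R2 -> m2 y = X y /\ p2 y = Q y).
  { intros y Hy. unfold m2, p2. destruct (Rlt_dec y Rr) as [Hl|Hl]; [|auto].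
    destruct (Agree y ltac:(lra)); auto. }
  assert (Eqm : forall y, y < Rr -> m2 y = m y /\ p2 y = p y).
  { intros y Hy. unfold m2, p2. destruct (Rlt_dec y Rr); [auto| lra]. }
  exists m2, p2, R2. split; [unfold R2; lra|]. split.
  - split; [exact Hr0|]. split; [simpl; unfold R2; lra|].
    intros r Hr1 Hr2. simpl in Hr2.
    destruct (Rlt_le_dec r Rr) as [Hlt|Hge].
    + destruct (Eqm r Hlt) as [E1 E2]. rewrite E1, E2.
      destruct (Hs r ltac:(lra)) as (P1&P2&D1&D2).
      assert (Loc : locally r (fun y => m y = m2 y /\ p y = p2 y)).
      { eapply filter_imp; [|apply (loc_interval r r0 Rr); lra]. intros y Hy. destruct (Eqm y ltac:(lra)); auto. }
      split; [auto|]. split; [auto|]. split.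
      * apply (is_derive_ext_loc m); auto. eapply filter_imp; [|exact Loc]. intros y [Y1 Y2]; auto.
      * apply (is_derive_ext_loc p); auto. eapply filter_imp; [|exact Loc]. intros y [Y1 Y2]; auto.
    + destruct (EqX r ltac:(unfold R2 in *; lra)) as [E1 E2]. rewrite E1, E2.
      destruct (Hout r ltac:(unfold R2 in *; lra)) as [[Q1 Q2] [X1 X2]].
      assert (Loc : locally r (fun y => X y = m2 y /\ Q y = p2 y)).
      { eapply filter_imp; [|apply (loc_interval r a R2); unfold R2 in *; lra]. intros y Hy. destruct (EqX y Hy); auto. }
      destruct (Der r ltac:(unfold R2 in *; lra)) as [D1 D2].
      rewrite (G1eq r) in D1 by (unfold R2 in *; lra). rewrite (G2eq r) in D2 by (unfold R2 in *; lra).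
      split; [lra|]. split; [lra|]. split.
      * apply (is_derive_ext_loc X); auto. eapply filter_imp; [|exact Loc]. intros y [Y1 Y2]; auto.
      * apply (is_derive_ext_loc Q); auto. eapply filter_imp; [|exact Loc]. intros y [Y1 Y2]; auto.
  - intros r Hr1 Hr2. apply Eqm; auto.
Qed.
Lemma at_left_intro (f : R -> R) (Rr l : R) :
  (forall eps, 0 < eps -> exists x0, x0 < Rr /\ forall y, x0 < y < Rr -> Rabs (f y - l) < eps) ->
  filterlim f (at_left Rr) (locally l).
Proof.
  intros H. apply filterlim_locally. intros eps.
  destruct (H eps (cond_pos eps)) as [x0 [Hx0 Hy]].
  exists (mkposreal (Rr - x0) ltac:(lra)). intros y Hy1 Hy2.
  unfold ball in Hy1; simpl in Hy1; unfold AbsRing_ball, abs, minus, plus, opp in Hy1; simpl in Hy1.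
  apply Rabs_def2 in Hy1.
  unfold ball; simpl; unfold AbsRing_ball, abs, minus, plus, opp; simpl.
  apply Hy. lra.
Qed.

Lemma finite_case rho eta rhoE B m p r0 Rr :
  EOSd rho eta rhoE B -> maximal_fluid_solution rho m p r0 (Finite Rr) ->
  filterlim p (at_left Rr) (locally 0) /\ exists M, filterlim m (at_left Rr) (locally M).
Proof.
  intros H [Hsol Hmax].
  pose proof Hsol as [Hr0 [HRr Hs0]]. simpl in HRr.
  assert (Hs : forall r, r0 < r < Rr -> 0 < p r /\ 0 < m r /\ is_derive m r (4 * PI * r ^ 2 * rho (p r)) /\
    is_derive p r (- (m r * rho (p r)) / r ^ 2)) by (intros r Hr; apply Hs0; simpl; lra).
  pose proof PI_RGT_0 as HPI.
  assert (pdec : forall x y, r0 < x -> x <= y -> y < Rr -> p y <= p x).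
  { intros x y Hx Hxy Hy. apply (mono_ge_cl p (fun r => - (m r * rho (p r)) / r ^ 2) x y Hxy).
    - intros z Hz. apply Hs; lra.
    - intros z Hz. destruct (Hs z ltac:(lra)) as (P1&P2&_). pose proof (rho_pos _ _ _ _ _ H P1).
      unfold Rdiv. assert (0 < / z ^ 2) by (apply Rinv_0_lt_compat, pow_lt; lra).
      assert (0 <= m z * rho (p z) * / z ^ 2) by (apply Rmult_le_pos; [apply Rmult_le_pos; lra| lra]). lra. }
  assert (minc : forall x y, r0 < x -> x <= y -> y < Rr -> m x <= m y).
  { intros x y Hx Hxy Hy. apply (mono_le_cl m (fun r => 4 * PI * r ^ 2 * rho (p r)) x y Hxy).
    - intros z Hz. apply Hs; lra.
    - intros z Hz. destruct (Hs z ltac:(lra)) as (P1&P2&_). pose proof (rho_pos _ _ _ _ _ H P1).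
      assert (0 <= z ^ 2) by (apply pow_le; lra). apply Rmult_le_pos; [|lra]. apply Rmult_le_pos; lra. }
  set (a1 := (r0 + Rr) / 2).
  assert (Ha1 : r0 < a1 < Rr) by (unfold a1; lra).
  set (Cm := 4 * PI * Rr ^ 2 * rho (p a1)).
  set (Mb := m a1 + Cm * Rr).
  assert (HCm : 0 <= Cm).
  { unfold Cm. pose proof (rho_pos _ _ _ _ _ H (proj1 (Hs a1 Ha1))). assert (0 <= Rr ^ 2) by (apply pow_le; lra).
    apply Rmult_le_pos; [|lra]. apply Rmult_le_pos; lra. }
  assert (HMb : forall r, r0 < r < Rr -> m r <= Mb).
  { intros r Hr. destruct (Rle_lt_dec r a1) as [Hle|Hlt].
    - pose proof (minc r a1 ltac:(lra) Hle ltac:(lra)). unfold Mb. assert (0 <= Cm * Rr) by (apply Rmult_le_pos; lra). lra.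
    - assert (Cm * a1 - m a1 <= Cm * r - m r).
      { apply (mono_le_cl (fun r => Cm * r - m r) (fun r => Cm - 4 * PI * r ^ 2 * rho (p r))); [lra| |].
        - intros z Hz. apply der_lin_minus. apply Hs; lra.
        - intros z Hz. destruct (Hs z ltac:(lra)) as (P1&_).
          assert (rho (p z) <= rho (p a1)).
          { apply (rho_mono _ _ _ _ _ _ H P1). apply pdec; lra. }
          assert (z ^ 2 <= Rr ^ 2) by (apply pow_incr; lra).
          assert (0 < rho (p z)) by (apply (rho_pos _ _ _ _ _ H P1)).
          unfold Cm. assert (4 * PI * z ^ 2 * rho (p z) <= 4 * PI * Rr ^ 2 * rho (p a1)).
          { apply Rmult_le_compat; try lra. apply Rmult_le_pos; [lra| apply pow_le; lra].
            apply Rmult_le_compat_l; lra. }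
          lra. }
      unfold Mb. assert (Cm * (r - a1) <= Cm * Rr) by (apply Rmult_le_compat_l; lra). lra. }
  split.
  - apply at_left_intro. intros eps Heps.
    destruct (classic (exists x0, r0 < x0 < Rr /\ p x0 < eps)) as [[x0 [Hx0 Hpx]]|Hno].
    + exists x0. split; [lra|]. intros y Hy. rewrite Rminus_0_r. destruct (Hs y ltac:(lra)) as (P1&_).
      rewrite Rabs_right by lra. pose proof (pdec x0 y ltac:(lra) ltac:(lra) ltac:(lra)). lra.
    + exfalso. apply Hmax.
      destruct (extend rho eta rhoE B m p r0 Rr H Hsol) as (m2 & p2 & R2 & HR2 & Hsol2 & Hag).
      * exists eps. split; auto. intros r Hr. destruct (Rlt_le_dec (p r) eps) as [Hl|Hl]; auto.
        exfalso. apply Hno. exists r. auto.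
      * exists Mb. exact HMb.
      * exists m2, p2, (Finite R2). split; [simpl; exact HR2|]. split; [exact Hsol2|].
        intros r Hr1 Hr2. simpl in Hr2. apply Hag; auto.
  - set (E := fun v => exists x, a1 <= x < Rr /\ v = m x).
    destruct (completeness E) as [M [HM1 HM2]].
    { exists Mb. intros v [x [Hx ->]]. apply HMb. lra. }
    { exists (m a1). exists a1. split; [lra|auto]. }
    exists M. apply at_left_intro. intros eps Heps.
    destruct (classic (exists x0, a1 <= x0 < Rr /\ M - eps < m x0)) as [[x0 [Hx0 Hm0]]|Hno].
    + exists x0. split; [lra|]. intros y Hy.
      pose proof (minc x0 y ltac:(lra) ltac:(lra) ltac:(lra)).
      assert (m y <= M) by (apply HM1; exists y; split; [lra| auto]).
      apply Rabs_def1; lra.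
    + exfalso. assert (M <= M - eps); [|lra]. apply HM2. intros v [x [Hx ->]].
      destruct (Rlt_le_dec (M - eps) (m x)) as [Hl|Hl]; auto. exfalso. apply Hno. exists x. auto.
Qed.

Theorem theorem2 (rho : R -> R) (n0 n1 a0 a1 : R)
  (m p : R -> R) (r0 : R) (Rb : Rbar) :
  EOS rho ->
  asymptotically_polytropic rho n0 n1 a0 a1 ->
  0 <= n0 <= 3 ->
  maximal_fluid_solution rho m p r0 Rb ->
  exists Rr : R,
    Rb = Finite Rr /\
    filterlim p (at_left Rr) (locally 0) /\
    exists M : R, filterlim m (at_left Rr) (locally M).
Proof.
  intros HE [eta [rhoE (He & Hrel & Hsurj & Hder & _ & Hn0 & Hn1 & [B HB] & Ha0 & Ha1 & Has0 & _)]] Hn Hmax.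
  assert (H : EOSd rho eta rhoE B) by (repeat split; auto; apply HB; auto).
  destruct Rb as [Rr| |].
  - exists Rr. split; [reflexivity|]. apply (finite_case rho eta rhoE B m p r0 Rr H Hmax).
  - exfalso. destruct Hmax as [Hsol _].
    apply (no_global rho eta rhoE B m p r0 H); auto.
    intros E1 HE1. apply (rhoE_lower rho eta rhoE B n0 a0 H); auto; lra.
  - exfalso. destruct Hmax as [[_ [Hlt _]] _]. simpl in Hlt. exact Hlt.
Qed.
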